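(* Let $M^2:l=l(u,v)$, $(u,v)$ in a neighbourhood of the origin in $\mathbb R^2$, be a generalized torus of second type in $S^3$ with non-constant Gauss curvature, parameterized so that: $\langle l_u,l_u\rangle=\langle l_v,l_v\rangle=E(u)$ depends only on $u$, $\langle l_u,l_v\rangle=0$, $\langle l,l\rangle=1$; for the unit normal $n$ of $M^2$ in $S^3$ (unit vector orthogonal to $l,l_u,l_v$) one has $\langle l_{uu},n\rangle=1$, $\langle l_{uv},n\rangle=0$, $\langle l_{vv},n\rangle=-1$; and $l(0,0)=e_1$, $l_u(0,0)=\sqrt{E(0)}\,e_2$, $l_v(0,0)=\sqrt{E(0)}\,e_3$, $n(0,0)=e_4$, where $e_1,e_2,e_3,e_4$ is the standard orthonormal basis of $\mathbb R^4$. Put $z(u)=\ln E(u)$, $s=z(0)$, $t=z'(0)/2$, and $\beta=\sqrt{t^2+2\cosh s}$. Then $z$ is the solution of $$z''+4\sinh z=0,\qquad z(0)=s,\quad z'(0)=2t,$$ and it is given explicitly by $z(u)=\ln\dfrac{\alpha^2\cos^2 h^{-1}(u+u_0)+\sin^2h^{-1}(u+u_0)}{\alpha}$ for suitable constants $\alpha>0$ and $u_0$, where $h(x)=\sqrt{\alpha}\int_0^x\frac{d\tau}{\sqrt{\alpha^2\cos^2\tau+\sin^2\tau}}$ and $h^{-1}$ is its inverse; moreover $$l(u,v)=e^{\frac{z(u)}{2}}p(u)+\frac{e^{\frac{z(u)}{2}}}{\beta^2}\Big[\cos\beta v\,\big(e^{\frac s2}e_1+t\,e_2+e^{-\frac s2}e_4\big)+\beta\sin\beta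 v\,e_3\Big],$$ where $p(u)$ is the $\mathbb R^4$-valued solution of the linear system $$p''(u)+z'(u)p'(u)+\beta^2p(u)=0,$$ $$p(0)=\frac{1}{\beta^2}\Big[e^{-\frac s2}(t^2+e^{-s})e_1-t\,e_2-e^{-\frac s2}e_4\Big],\qquad p'(0)=-t\,e^{-\frac s2}e_1+e_2.$$
   Context: $\mathbb R^4$ carries the standard Euclidean inner product and $S^3$ is its unit sphere. A surface in $S^3$ is minimal if its mean curvature in $S^3$ (with respect to a unit normal orthogonal to the position vector and tangent plane) vanishes. Principal lines are the lines of curvature of the surface in $S^3$. A circle is a curve in $\mathbb R^4$ with constant first Frenet curvature and vanishing higher Frenet curvatures. A generalized torus of second type is a minimal surface in $S^3$ on which one of the families of principal lines is a family of circles. (In the parameterization of the claim the $v$-lines are the circles.) *)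

(* Defs.v *)
From Stdlib Require Import Reals.
From Coquelicot Require Import Coquelicot.
Open Scope R_scope.

Definition V4 : Type := (R * R * R * R)%type.
Definition mk4 (a b c d : R) : V4 := (a, b, c, d).
Definition x1 (w : V4) : R := fst (fst (fst w)).
Definition x2 (w : V4) : R := snd (fst (fst w)).
Definition x3 (w : V4) : R := snd (fst w).
Definition x4 (w : V4) : R := snd w.

Definition vadd (w w' : V4) : V4 :=
  mk4 (x1 w + x1 w') (x2 w + x2 w') (x3 w + x3 w') (x4 w + x4 w').
Definition vscal (k : R) (w : V4) : V4 :=
  mk4 (k * x1 w) (k * x2 w) (k * x3 w) (k * x4 w).
Definition vzero : V4 := mk4 0 0 0 0.

Definition dot (w w' : V4) : R :=
  x1 w * x1 w' + x2 w * x2 w' + x3 w * x3 w' + x4 w * x4 w'.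
Definition vnorm (w : V4) : R := sqrt (dot w w).

Definition e1 : V4 := mk4 1 0 0 0.
Definition e2 : V4 := mk4 0 1 0 0.
Definition e3 : V4 := mk4 0 0 1 0.
Definition e4 : V4 := mk4 0 0 0 1.

Definition ex_derive_v (f : R -> V4) (x : R) : Prop :=
  ex_derive (fun y => x1 (f y)) x /\ ex_derive (fun y => x2 (f y)) x /\
  ex_derive (fun y => x3 (f y)) x /\ ex_derive (fun y => x4 (f y)) x.
Definition Dv (f : R -> V4) (x : R) : V4 :=
  mk4 (Derive (fun y => x1 (f y)) x) (Derive (fun y => x2 (f y)) x)
      (Derive (fun y => x3 (f y)) x) (Derive (fun y => x4 (f y)) x).

Definition pu (l : R -> R -> V4) : R -> R -> V4 := fun u v => Dv (fun x => l x v) u.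
Definition pv (l : R -> R -> V4) : R -> R -> V4 := fun u v => Dv (fun y => l u y) v.

Definition su (f : R -> R -> R) : R -> R -> R := fun u v => Derive (fun x => f x v) u.
Definition sv (f : R -> R -> R) : R -> R -> R := fun u v => Derive (fun y => f u y) v.

Fixpoint Cn (n : nat) (D : R -> R -> Prop) (f : R -> R -> R) : Prop :=
  match n with
  | O => forall u v, D u v -> continuity_2d_pt f u v
  | S k =>
      (forall u v, D u v ->
         continuity_2d_pt f u v /\
         ex_derive (fun x => f x v) u /\ ex_derive (fun y => f u y) v) /\
      Cn k D (su f) /\ Cn k D (sv f)
  end.
Definition smooth_on (D : R -> R -> Prop) (f : R -> R -> R) : Prop :=
  forall n, Cn n D f.
Definition smooth_on_v (D : R -> R -> Prop) (l : R -> R -> V4) : Prop :=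
  smooth_on D (fun u v => x1 (l u v)) /\ smooth_on D (fun u v => x2 (l u v)) /\
  smooth_on D (fun u v => x3 (l u v)) /\ smooth_on D (fun u v => x4 (l u v)).

Definition fE (l : R -> R -> V4) u v := dot (pu l u v) (pu l u v).
Definition fF (l : R -> R -> V4) u v := dot (pu l u v) (pv l u v).
Definition fG (l : R -> R -> V4) u v := dot (pv l u v) (pv l u v).
Definition fL (l n : R -> R -> V4) u v := dot (pu (pu l) u v) (n u v).
Definition fM (l n : R -> R -> V4) u v := dot (pv (pu l) u v) (n u v).
Definition fN (l n : R -> R -> V4) u v := dot (pv (pv l) u v) (n u v).

Definition mean_curvature (l n : R -> R -> V4) u v : R :=
  (fE l u v * fN l n u v - 2 * fF l u v * fM l n u v + fG l u v * fL l n u v)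
  / (2 * (fE l u v * fG l u v - fF l u v ^ 2)).

(** (intrinsic) Gauss curvature of the induced metric, Brioschi formula *)
Definition det3 (a11 a12 a13 a21 a22 a23 a31 a32 a33 : R) : R :=
  a11 * (a22 * a33 - a23 * a32) - a12 * (a21 * a33 - a23 * a31)
  + a13 * (a21 * a32 - a22 * a31).
Definition gauss_curvature (l : R -> R -> V4) u v : R :=
  let E := fE l in let F := fF l in let G := fG l in
  (det3 (- sv (sv E) u v / 2 + sv (su F) u v - su (su G) u v / 2)
        (su E u v / 2) (su F u v - sv E u v / 2)
        (sv F u v - su G u v / 2) (E u v) (F u v)
        (sv G u v / 2) (F u v) (G u v)
   - det3 0 (sv E u v / 2) (su G u v / 2)
          (sv E u v / 2) (E u v) (F u v)
          (su G u v / 2) (F u v) (G u v))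
  / (E u v * G u v - F u v ^ 2) ^ 2.

(** * Circles: constant first Frenet curvature kappa > 0, vanishing higher
    Frenet curvatures, i.e. T' = |c'| kappa N, N' = - |c'| kappa T. *)
Definition unit_tangent (c : R -> V4) (x : R) : V4 :=
  vscal (/ vnorm (Dv c x)) (Dv c x).
Definition is_circle_on (I : R -> Prop) (c : R -> V4) : Prop :=
  exists kappa : R, 0 < kappa /\
  exists N : R -> V4, forall x, I x ->
    ex_derive_v c x /\ 0 < vnorm (Dv c x) /\
    vnorm (N x) = 1 /\
    ex_derive_v (unit_tangent c) x /\ ex_derive_v N x /\
    Dv (unit_tangent c) x = vscal (vnorm (Dv c x) * kappa) (N x) /\
    Dv N x = vscal (- (vnorm (Dv c x) * kappa)) (unit_tangent c x).

Definition h_fun (alpha x : R) : R :=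
  sqrt alpha * RInt (fun tau => / sqrt (alpha ^ 2 * cos tau ^ 2 + sin tau ^ 2)) 0 x.

(* Main.v *)
Require Import Defs.
From Stdlib Require Import Reals Lra Psatz.
From Coquelicot Require Import Coquelicot.
Open Scope R_scope.

Lemma isd_eq (f : R -> R) x l l' : is_derive f x l -> l = l' -> is_derive f x l'.
Proof. intros H ->; exact H. Qed.

Lemma isd_mult (f g : R -> R) x df dg :
  is_derive f x df -> is_derive g x dg ->
  is_derive (fun y => f y * g y) x (df * g x + f x * dg).
Proof. intros H1 H2. apply (is_derive_mult f g x df dg H1 H2). intros; apply Rmult_comm. Qed.

Lemma isd_plus (f g : R -> R) x df dg :
  is_derive f x df -> is_derive g x dg ->
  is_derive (fun y => f y + g y) x (df + dg).
Proof. intros H1 H2. apply (is_derive_plus f g x df dg H1 H2). Qed.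

Lemma isd_minus (f g : R -> R) x df dg :
  is_derive f x df -> is_derive g x dg ->
  is_derive (fun y => f y - g y) x (df - dg).
Proof. intros H1 H2. apply (is_derive_minus f g x df dg H1 H2). Qed.

Lemma isd_scal (f : R -> R) x k df :
  is_derive f x df -> is_derive (fun y => k * f y) x (k * df).
Proof. apply is_derive_scal. Qed.

Lemma isd_const (k x : R) : is_derive (fun _ => k) x 0.
Proof. apply (is_derive_const k x). Qed.

Lemma isd_id (x : R) : is_derive (fun y => y) x 1.
Proof. apply (is_derive_id x). Qed.

Lemma isd_comp (f g : R -> R) x df dg :
  is_derive f (g x) df -> is_derive g x dg ->
  is_derive (fun y => f (g y)) x (dg * df).
Proof. intros H1 H2. apply (is_derive_comp f g x df dg H1 H2). Qed.

Lemma isd_Derive (f : R -> R) x : ex_derive f x -> is_derive f x (Derive f x).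
Proof. apply Derive_correct. Qed.

Lemma locally_interval (lo hi x : R) : lo < x < hi ->
  locally x (fun y => lo < y < hi).
Proof.
  intros [H1 H2].
  assert (Hp : 0 < Rmin (x - lo) (hi - x)) by (apply Rmin_pos; lra).
  exists (mkposreal _ Hp). intros y Hy. simpl in Hy.
  unfold ball in Hy; simpl in Hy; unfold AbsRing_ball, abs, minus, plus, opp in Hy; simpl in Hy.
  assert (Hm1 := Rmin_l (x - lo) (hi - x)). assert (Hm2 := Rmin_r (x - lo) (hi - x)).
  apply Rabs_def2 in Hy. lra.
Qed.

Lemma isd_ext_int (lo hi : R) (f g : R -> R) x l :
  lo < x < hi -> (forall y, lo < y < hi -> f y = g y) ->
  is_derive f x l -> is_derive g x l.
Proof.
  intros Hx Hfg H. apply (is_derive_ext_loc f g x l); auto.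
  apply (filter_imp (fun y => lo < y < hi)); auto. apply locally_interval; auto.
Qed.

Lemma isd_continuity (f : R -> R) x l : is_derive f x l -> continuity_pt f x.
Proof.
  intros H. apply continuity_pt_filterlim. apply (ex_derive_continuous (K:=R_AbsRing) (V:=R_NormedModule) f x). exists l; auto.
Qed.

Lemma mvt_int (lo hi : R) (f df : R -> R) x y :
  (forall z, lo < z < hi -> is_derive f z (df z)) ->
  lo < x < hi -> lo < y < hi ->
  exists c, Rmin x y <= c <= Rmax x y /\ f y - f x = df c * (y - x).
Proof.
  intros Hd Hx Hy.
  destruct (MVT_gen f x y df) as [c [Hc Hc2]].
  - intros z Hz. apply Hd. split.
    + apply Rlt_le_trans with (Rmin x y). apply Rmin_glb_lt; lra. lra.
    + apply Rlt_le_trans with (Rmax x y). lra. apply Rmax_lub; lra.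
  - intros z Hz. apply isd_continuity with (df z). apply Hd. split.
    + apply Rlt_le_trans with (Rmin x y). apply Rmin_glb_lt; lra. lra.
    + apply Rle_lt_trans with (Rmax x y). lra. apply Rmax_lub_lt; lra.
  - exists c; auto.
Qed.

Lemma const_int (lo hi : R) (f : R -> R) x y :
  (forall z, lo < z < hi -> is_derive f z 0) ->
  lo < x < hi -> lo < y < hi -> f y = f x.
Proof.
  intros Hd Hx Hy. destruct (mvt_int lo hi f (fun _ => 0) x y) as [c [_ Hc]]; auto.
  lra.
Qed.

Lemma V4_eq (w w' : V4) : x1 w = x1 w' -> x2 w = x2 w' -> x3 w = x3 w' -> x4 w = x4 w' -> w = w'.
Proof.
  destruct w as [[[a1 a2] a3] a4]; destruct w' as [[[b1 b2] b3] b4].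
  unfold x1, x2, x3, x4; simpl. intros -> -> -> ->; reflexivity.
Qed.

Definition det4 (a b c d : V4) : R :=
  x1 a * det3 (x2 b) (x3 b) (x4 b) (x2 c) (x3 c) (x4 c) (x2 d) (x3 d) (x4 d)
- x2 a * det3 (x1 b) (x3 b) (x4 b) (x1 c) (x3 c) (x4 c) (x1 d) (x3 d) (x4 d)
+ x3 a * det3 (x1 b) (x2 b) (x4 b) (x1 c) (x2 c) (x4 c) (x1 d) (x2 d) (x4 d)
- x4 a * det3 (x1 b) (x2 b) (x3 b) (x1 c) (x2 c) (x3 c) (x1 d) (x2 d) (x3 d).

Lemma det4_gram (a b c d : V4) :
  det4 a b c d * det4 a b c d =
  det4 (mk4 (dot a a) (dot a b) (dot a c) (dot a d))
       (mk4 (dot b a) (dot b b) (dot b c) (dot b d))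
       (mk4 (dot c a) (dot c b) (dot c c) (dot c d))
       (mk4 (dot d a) (dot d b) (dot d c) (dot d d)).
Proof.
  destruct a as [[[a1 a2] a3] a4]; destruct b as [[[b1 b2] b3] b4];
  destruct c as [[[c1 c2] c3] c4]; destruct d as [[[d1 d2] d3] d4].
  unfold det4, det3, dot, mk4, x1, x2, x3, x4; simpl. ring.
Qed.


Lemma frame_zero (a b c d x : V4) : det4 a b c d <> 0 ->
  dot x a = 0 -> dot x b = 0 -> dot x c = 0 -> dot x d = 0 -> x = vzero.
Proof.
  intros Hd Ha Hb Hc Hdd.
  assert (C1 : det4 a b c d * x1 x = det4 (mk4 (dot x a) (x2 a) (x3 a) (x4 a)) (mk4 (dot x b) (x2 b) (x3 b) (x4 b))
        (mk4 (dot x c) (x2 c) (x3 c) (x4 c)) (mk4 (dot x d) (x2 d) (x3 d) (x4 d)))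
    by (unfold det4, det3, dot, mk4, x1, x2, x3, x4; simpl; ring).
  assert (C2 : det4 a b c d * x2 x = det4 (mk4 (x1 a) (dot x a) (x3 a) (x4 a)) (mk4 (x1 b) (dot x b) (x3 b) (x4 b))
        (mk4 (x1 c) (dot x c) (x3 c) (x4 c)) (mk4 (x1 d) (dot x d) (x3 d) (x4 d)))
    by (unfold det4, det3, dot, mk4, x1, x2, x3, x4; simpl; ring).
  assert (C3 : det4 a b c d * x3 x = det4 (mk4 (x1 a) (x2 a) (dot x a) (x4 a)) (mk4 (x1 b) (x2 b) (dot x b) (x4 b))
        (mk4 (x1 c) (x2 c) (dot x c) (x4 c)) (mk4 (x1 d) (x2 d) (dot x d) (x4 d)))
    by (unfold det4, det3, dot, mk4, x1, x2, x3, x4; simpl; ring).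
  assert (C4 : det4 a b c d * x4 x = det4 (mk4 (x1 a) (x2 a) (x3 a) (dot x a)) (mk4 (x1 b) (x2 b) (x3 b) (dot x b))
        (mk4 (x1 c) (x2 c) (x3 c) (dot x c)) (mk4 (x1 d) (x2 d) (x3 d) (dot x d)))
    by (unfold det4, det3, dot, mk4, x1, x2, x3, x4; simpl; ring).
  rewrite Ha, Hb, Hc, Hdd in C1, C2, C3, C4.
  assert (Z : forall k, det4 a b c d * k = 0 -> k = 0).
  { intros k Hk. destruct (Rmult_integral _ _ Hk); auto; contradiction. }
  apply V4_eq; unfold vzero, mk4, x1, x2, x3, x4 in *; simpl in *; apply Z.
  - rewrite C1; unfold det4, det3, x1, x2, x3, x4; simpl; ring.
  - rewrite C2; unfold det4, det3, x1, x2, x3, x4; simpl; ring.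
  - rewrite C3; unfold det4, det3, x1, x2, x3, x4; simpl; ring.
  - rewrite C4; unfold det4, det3, x1, x2, x3, x4; simpl; ring.
Qed.

Definition vsub (w w' : V4) : V4 := vadd w (vscal (-1) w').

Lemma dot_vsub (x y a : V4) : dot (vsub x y) a = dot x a - dot y a.
Proof. unfold vsub, vadd, vscal, dot, mk4, x1, x2, x3, x4; simpl; ring. Qed.

Lemma vsub_zero (x y : V4) : vsub x y = vzero -> x = y.
Proof.
  intros H. apply V4_eq;
  apply (f_equal (fun w => (x1 w, x2 w, x3 w, x4 w))) in H;
  unfold vsub, vadd, vscal, vzero, mk4, x1, x2, x3, x4 in *; simpl in *;
  injection H; intros; lra.
Qed.

Lemma frame_eq (a b c d x y : V4) : det4 a b c d <> 0 ->
  dot x a = dot y a -> dot x b = dot y b -> dot x c = dot y c -> dot x d = dot y d -> x = y.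
Proof.
  intros Hd Ha Hb Hc Hdd. apply vsub_zero. apply (frame_zero a b c d); auto;
  rewrite dot_vsub; lra.
Qed.

Lemma dot_comm (x y : V4) : dot x y = dot y x.
Proof. unfold dot; ring. Qed.
Lemma dot_vadd_l (x y a : V4) : dot (vadd x y) a = dot x a + dot y a.
Proof. unfold vadd, dot, mk4, x1, x2, x3, x4; simpl; ring. Qed.
Lemma dot_vscal_l (k : R) (x a : V4) : dot (vscal k x) a = k * dot x a.
Proof. unfold vscal, dot, mk4, x1, x2, x3, x4; simpl; ring. Qed.

Ltac rring := match goal with |- ?A = ?B => change (@eq R A B) end; ring.
Ltac rfield := match goal with |- ?A = ?B => change (@eq R A B) end; field.

Definition Dab (a b : R) : R -> R -> Prop := fun u v => -a < u < a /\ -b < v < b.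


Lemma sm_su (D : R -> R -> Prop) f : smooth_on D f -> smooth_on D (su f).
Proof. intros H n. exact (proj1 (proj2 (H (S n)))). Qed.
Lemma sm_sv (D : R -> R -> Prop) f : smooth_on D f -> smooth_on D (sv f).
Proof. intros H n. exact (proj2 (proj2 (H (S n)))). Qed.
Lemma sm_du (D : R -> R -> Prop) f u v : smooth_on D f -> D u v -> ex_derive (fun x => f x v) u.
Proof. intros H Hd. exact (proj1 (proj2 (proj1 (H 1%nat) u v Hd))). Qed.
Lemma sm_dv (D : R -> R -> Prop) f u v : smooth_on D f -> D u v -> ex_derive (fun y => f u y) v.
Proof. intros H Hd. exact (proj2 (proj2 (proj1 (H 1%nat) u v Hd))). Qed.
Lemma sm_cont (D : R -> R -> Prop) f u v : smooth_on D f -> D u v -> continuity_2d_pt f u v.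
Proof. intros H Hd. exact (H 0%nat u v Hd). Qed.

Lemma Dab_loc a b u v : Dab a b u v -> locally_2d (Dab a b) u v.
Proof.
  intros [[H1 H2] [H3 H4]].
  assert (Hp : 0 < Rmin (Rmin (u + a) (a - u)) (Rmin (v + b) (b - v))).
  { repeat apply Rmin_pos; lra. }
  exists (mkposreal _ Hp). simpl. intros x y Hx Hy.
  assert (A1 := Rmin_l (Rmin (u + a) (a - u)) (Rmin (v + b) (b - v))).
  assert (A2 := Rmin_r (Rmin (u + a) (a - u)) (Rmin (v + b) (b - v))).
  assert (A3 := Rmin_l (u + a) (a - u)). assert (A4 := Rmin_r (u + a) (a - u)).
  assert (A5 := Rmin_l (v + b) (b - v)). assert (A6 := Rmin_r (v + b) (b - v)).
  apply Rabs_def2 in Hx. apply Rabs_def2 in Hy. unfold Dab. lra.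
Qed.

Lemma sm_schwarz a b f u v : smooth_on (Dab a b) f -> Dab a b u v ->
  su (sv f) u v = sv (su f) u v.
Proof.
  intros H Hd. unfold su, sv.
  apply (Schwarz f u v).
  - destruct (Dab_loc a b u v Hd) as [d Hdl]. exists d. intros x y Hx Hy.
    specialize (Hdl x y Hx Hy).
    split; [|split; [|split]].
    + exact (sm_du _ f x y H Hdl).
    + exact (sm_dv _ f x y H Hdl).
    + exact (sm_du _ (sv f) x y (sm_sv _ f H) Hdl).
    + exact (sm_dv _ (su f) x y (sm_su _ f H) Hdl).
  - exact (sm_cont _ (su (sv f)) u v (sm_su _ _ (sm_sv _ f H)) Hd).
  - exact (sm_cont _ (sv (su f)) u v (sm_sv _ _ (sm_su _ f H)) Hd).
Qed.

Lemma smv_pu (D : R -> R -> Prop) L : smooth_on_v D L -> smooth_on_v D (pu L).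
Proof.
  intros [H1 [H2 [H3 H4]]].
  split; [exact (sm_su _ _ H1)|split; [exact (sm_su _ _ H2)|split; [exact (sm_su _ _ H3)|exact (sm_su _ _ H4)]]].
Qed.
Lemma smv_pv (D : R -> R -> Prop) L : smooth_on_v D L -> smooth_on_v D (pv L).
Proof.
  intros [H1 [H2 [H3 H4]]].
  split; [exact (sm_sv _ _ H1)|split; [exact (sm_sv _ _ H2)|split; [exact (sm_sv _ _ H3)|exact (sm_sv _ _ H4)]]].
Qed.

Lemma smv_schwarz a b L u v : smooth_on_v (Dab a b) L -> Dab a b u v ->
  pu (pv L) u v = pv (pu L) u v.
Proof.
  intros [H1 [H2 [H3 H4]]] Hd. apply V4_eq.
  - exact (sm_schwarz a b _ u v H1 Hd).
  - exact (sm_schwarz a b _ u v H2 Hd).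
  - exact (sm_schwarz a b _ u v H3 Hd).
  - exact (sm_schwarz a b _ u v H4 Hd).
Qed.

Lemma smv_isd_u (D : R -> R -> Prop) L u v : smooth_on_v D L -> D u v ->
  is_derive (fun x => x1 (L x v)) u (x1 (pu L u v)) /\
  is_derive (fun x => x2 (L x v)) u (x2 (pu L u v)) /\
  is_derive (fun x => x3 (L x v)) u (x3 (pu L u v)) /\
  is_derive (fun x => x4 (L x v)) u (x4 (pu L u v)).
Proof.
  intros [H1 [H2 [H3 H4]]] Hd.
  split; [|split; [|split]]; apply isd_Derive;
  [exact (sm_du _ _ u v H1 Hd)|exact (sm_du _ _ u v H2 Hd)|exact (sm_du _ _ u v H3 Hd)|exact (sm_du _ _ u v H4 Hd)].
Qed.
Lemma smv_isd_v (D : R -> R -> Prop) L u v : smooth_on_v D L -> D u v ->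
  is_derive (fun y => x1 (L u y)) v (x1 (pv L u v)) /\
  is_derive (fun y => x2 (L u y)) v (x2 (pv L u v)) /\
  is_derive (fun y => x3 (L u y)) v (x3 (pv L u v)) /\
  is_derive (fun y => x4 (L u y)) v (x4 (pv L u v)).
Proof.
  intros [H1 [H2 [H3 H4]]] Hd.
  split; [|split; [|split]]; apply isd_Derive;
  [exact (sm_dv _ _ u v H1 Hd)|exact (sm_dv _ _ u v H2 Hd)|exact (sm_dv _ _ u v H3 Hd)|exact (sm_dv _ _ u v H4 Hd)].
Qed.

Lemma dot_isd (f g df dg : R -> V4) x :
  is_derive (fun y => x1 (f y)) x (x1 (df x)) ->
  is_derive (fun y => x2 (f y)) x (x2 (df x)) ->
  is_derive (fun y => x3 (f y)) x (x3 (df x)) ->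
  is_derive (fun y => x4 (f y)) x (x4 (df x)) ->
  is_derive (fun y => x1 (g y)) x (x1 (dg x)) ->
  is_derive (fun y => x2 (g y)) x (x2 (dg x)) ->
  is_derive (fun y => x3 (g y)) x (x3 (dg x)) ->
  is_derive (fun y => x4 (g y)) x (x4 (dg x)) ->
  is_derive (fun y => dot (f y) (g y)) x (dot (df x) (g x) + dot (f x) (dg x)).
Proof.
  intros F1 F2 F3 F4 G1 G2 G3 G4. unfold dot.
  apply (isd_eq _ _ _ _ (isd_plus _ _ _ _ _ (isd_plus _ _ _ _ _ (isd_plus _ _ _ _ _
     (isd_mult _ _ _ _ _ F1 G1) (isd_mult _ _ _ _ _ F2 G2)) (isd_mult _ _ _ _ _ F3 G3))
     (isd_mult _ _ _ _ _ F4 G4))). match goal with |- ?A = ?B => change (@eq R A B) end; ring.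
Qed.

Lemma dot_du (D : R -> R -> Prop) L M u v : smooth_on_v D L -> smooth_on_v D M -> D u v ->
  is_derive (fun x => dot (L x v) (M x v)) u (dot (pu L u v) (M u v) + dot (L u v) (pu M u v)).
Proof.
  intros HL HM Hd. destruct (smv_isd_u D L u v HL Hd) as [F1 [F2 [F3 F4]]].
  destruct (smv_isd_u D M u v HM Hd) as [G1 [G2 [G3 G4]]].
  exact (dot_isd (fun x => L x v) (fun x => M x v) (fun x => pu L x v) (fun x => pu M x v) u
    F1 F2 F3 F4 G1 G2 G3 G4).
Qed.
Lemma dot_dv (D : R -> R -> Prop) L M u v : smooth_on_v D L -> smooth_on_v D M -> D u v ->
  is_derive (fun y => dot (L u y) (M u y)) v (dot (pv L u v) (M u v) + dot (L u v) (pv M u v)).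
Proof.
  intros HL HM Hd. destruct (smv_isd_v D L u v HL Hd) as [F1 [F2 [F3 F4]]].
  destruct (smv_isd_v D M u v HM Hd) as [G1 [G2 [G3 G4]]].
  exact (dot_isd (fun y => L u y) (fun y => M u y) (fun y => pv L u y) (fun y => pv M u y) v
    F1 F2 F3 F4 G1 G2 G3 G4).
Qed.

Lemma dot_du_eq a b L M u v (c : R -> R) dc :
  smooth_on_v (Dab a b) L -> smooth_on_v (Dab a b) M -> Dab a b u v ->
  (forall x, -a < x < a -> dot (L x v) (M x v) = c x) -> is_derive c u dc ->
  dot (pu L u v) (M u v) + dot (L u v) (pu M u v) = dc.
Proof.
  intros HL HM Hd Hc Hdc.
  assert (H1 := dot_du _ L M u v HL HM Hd).
  assert (H2 : is_derive (fun x => dot (L x v) (M x v)) u dc).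
  { apply (isd_ext_int (-a) a c); [apply Hd| |exact Hdc]. intros y Hy; symmetry; auto. }
  rewrite <- (is_derive_unique _ _ _ H1). apply is_derive_unique; exact H2.
Qed.
Lemma dot_dv_eq a b L M u v (c : R -> R) dc :
  smooth_on_v (Dab a b) L -> smooth_on_v (Dab a b) M -> Dab a b u v ->
  (forall y, -b < y < b -> dot (L u y) (M u y) = c y) -> is_derive c v dc ->
  dot (pv L u v) (M u v) + dot (L u v) (pv M u v) = dc.
Proof.
  intros HL HM Hd Hc Hdc.
  assert (H1 := dot_dv _ L M u v HL HM Hd).
  assert (H2 : is_derive (fun y => dot (L u y) (M u y)) v dc).
  { apply (isd_ext_int (-b) b c); [apply Hd| |exact Hdc]. intros y Hy; symmetry; auto. }
  rewrite <- (is_derive_unique _ _ _ H1). apply is_derive_unique; exact H2.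
Qed.

Record Hyp (a b : R) (l n : R -> R -> V4) (E : R -> R) : Prop := mkHyp {
  h_a : 0 < a; h_b : 0 < b;
  h_l : smooth_on_v (Dab a b) l; h_n : smooth_on_v (Dab a b) n;
  h_E : forall u, -a < u < a -> 0 < E u;
  h_id : forall u v, Dab a b u v ->
     dot (l u v) (l u v) = 1 /\
     dot (pu l u v) (pu l u v) = E u /\
     dot (pv l u v) (pv l u v) = E u /\
     dot (pu l u v) (pv l u v) = 0 /\
     dot (n u v) (n u v) = 1 /\
     dot (n u v) (l u v) = 0 /\
     dot (n u v) (pu l u v) = 0 /\
     dot (n u v) (pv l u v) = 0 /\
     dot (pu (pu l) u v) (n u v) = 1 /\
     dot (pv (pu l) u v) (n u v) = 0 /\
     dot (pv (pv l) u v) (n u v) = -1 }.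

Ltac gid H u v Hd :=
  let G := fresh "G" in
  destruct (h_id _ _ _ _ _ H u v Hd) as
    (G_ll & G_lulu & G_lvlv & G_lulv & G_nn & G_nl & G_nlu & G_nlv & G_luun & G_luvn & G_lvvn).

Lemma Dab_u a b u v : Dab a b u v -> -a < u < a.
Proof. intros [H _]; exact H. Qed.
Lemma Dab_v a b u v : Dab a b u v -> -b < v < b.
Proof. intros [_ H]; exact H. Qed.

Lemma E_der a b l n E u v : Hyp a b l n E -> Dab a b u v ->
  is_derive E u (2 * dot (pu (pu l) u v) (pu l u v)).
Proof.
  intros H Hd.
  assert (H1 := dot_du _ (pu l) (pu l) u v (smv_pu _ _ (h_l _ _ _ _ _ H)) (smv_pu _ _ (h_l _ _ _ _ _ H)) Hd).
  apply (isd_ext_int (-a) a (fun x => dot (pu l x v) (pu l x v))); [apply Hd| |].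
  - intros y Hy. destruct (h_id _ _ _ _ _ H y v (conj Hy (Dab_v _ _ _ _ Hd))) as (_ & G & _). exact G.
  - eapply isd_eq; [exact H1|]. rewrite (dot_comm (pu l u v)). rring.
Qed.

Lemma E_isd a b l n E u : Hyp a b l n E -> -a < u < a -> is_derive E u (Derive E u).
Proof.
  intros H Hu. assert (Hd : Dab a b u 0) by (split; auto; pose proof (h_b _ _ _ _ _ H); lra).
  apply isd_Derive. eexists. apply (E_der _ _ _ _ _ _ _ H Hd).
Qed.

Lemma dE_eq a b l n E u v : Hyp a b l n E -> Dab a b u v ->
  Derive E u = 2 * dot (pu (pu l) u v) (pu l u v).
Proof. intros H Hd. apply is_derive_unique. apply (E_der _ _ _ _ _ _ _ H Hd). Qed.

Ltac smh H := match goal with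
 | |- smooth_on_v _ (pu ?L) => apply smv_pu; smh H
 | |- smooth_on_v _ (pv ?L) => apply smv_pv; smh H
 | |- _ => first [exact (h_l _ _ _ _ _ H) | exact (h_n _ _ _ _ _ H)] end.

Lemma f_lul a b l n E u v : Hyp a b l n E -> Dab a b u v -> dot (pu l u v) (l u v) = 0.
Proof.
  intros H Hd.
  assert (K := dot_du_eq a b l l u v (fun _ => 1) 0 ltac:(smh H) ltac:(smh H) Hd
    ltac:(intros x Hx; gid H x v (conj Hx (Dab_v _ _ _ _ Hd)); exact G_ll) (isd_const 1 u)).
  rewrite (dot_comm (l u v)) in K. lra.
Qed.
Lemma f_lvl a b l n E u v : Hyp a b l n E -> Dab a b u v -> dot (pv l u v) (l u v) = 0.
Proof.
  intros H Hd.
  assert (K := dot_dv_eq a b l l u v (fun _ => 1) 0 ltac:(smh H) ltac:(smh H) Hd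
    ltac:(intros y Hy; gid H u y (conj (Dab_u _ _ _ _ Hd) Hy); exact G_ll) (isd_const 1 v)).
  rewrite (dot_comm (l u v)) in K. lra.
Qed.
Lemma f_luul a b l n E u v : Hyp a b l n E -> Dab a b u v -> dot (pu (pu l) u v) (l u v) = - E u.
Proof.
  intros H Hd.
  assert (K := dot_du_eq a b (pu l) l u v (fun _ => 0) 0 ltac:(smh H) ltac:(smh H) Hd
    ltac:(intros x Hx; exact (f_lul _ _ _ _ _ _ _ H (conj Hx (Dab_v _ _ _ _ Hd)))) (isd_const 0 u)).
  gid H u v Hd. lra.
Qed.
Lemma f_luvl a b l n E u v : Hyp a b l n E -> Dab a b u v -> dot (pv (pu l) u v) (l u v) = 0.
Proof.
  intros H Hd.
  assert (K := dot_dv_eq a b (pu l) l u v (fun _ => 0) 0 ltac:(smh H) ltac:(smh H) Hd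
    ltac:(intros y Hy; exact (f_lul _ _ _ _ _ _ _ H (conj (Dab_u _ _ _ _ Hd) Hy))) (isd_const 0 v)).
  gid H u v Hd. lra.
Qed.
Lemma f_lvvl a b l n E u v : Hyp a b l n E -> Dab a b u v -> dot (pv (pv l) u v) (l u v) = - E u.
Proof.
  intros H Hd.
  assert (K := dot_dv_eq a b (pv l) l u v (fun _ => 0) 0 ltac:(smh H) ltac:(smh H) Hd
    ltac:(intros y Hy; exact (f_lvl _ _ _ _ _ _ _ H (conj (Dab_u _ _ _ _ Hd) Hy))) (isd_const 0 v)).
  gid H u v Hd. lra.
Qed.
Lemma f_luulu a b l n E u v : Hyp a b l n E -> Dab a b u v -> dot (pu (pu l) u v) (pu l u v) = Derive E u / 2.
Proof.
  intros H Hd. rewrite (dE_eq _ _ _ _ _ _ _ H Hd). field.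
Qed.
Lemma f_luvlu a b l n E u v : Hyp a b l n E -> Dab a b u v -> dot (pv (pu l) u v) (pu l u v) = 0.
Proof.
  intros H Hd.
  assert (K := dot_dv_eq a b (pu l) (pu l) u v (fun _ => E u) 0 ltac:(smh H) ltac:(smh H) Hd
    ltac:(intros y Hy; gid H u y (conj (Dab_u _ _ _ _ Hd) Hy); exact G_lulu) (isd_const (E u) v)).
  rewrite (dot_comm (pu l u v)) in K. lra.
Qed.
Lemma f_luvlv a b l n E u v : Hyp a b l n E -> Dab a b u v -> dot (pv (pu l) u v) (pv l u v) = Derive E u / 2.
Proof.
  intros H Hd.
  assert (K := dot_du_eq a b (pv l) (pv l) u v E (Derive E u) ltac:(smh H) ltac:(smh H) Hd
    ltac:(intros x Hx; gid H x v (conj Hx (Dab_v _ _ _ _ Hd)); exact G_lvlv) (E_isd _ _ _ _ _ _ H (Dab_u _ _ _ _ Hd))).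
  rewrite (smv_schwarz a b l u v (h_l _ _ _ _ _ H) Hd) in K.
  rewrite (dot_comm (pv l u v)) in K. lra.
Qed.
Lemma f_lvvlv a b l n E u v : Hyp a b l n E -> Dab a b u v -> dot (pv (pv l) u v) (pv l u v) = 0.
Proof.
  intros H Hd.
  assert (K := dot_dv_eq a b (pv l) (pv l) u v (fun _ => E u) 0 ltac:(smh H) ltac:(smh H) Hd
    ltac:(intros y Hy; gid H u y (conj (Dab_u _ _ _ _ Hd) Hy); exact G_lvlv) (isd_const (E u) v)).
  rewrite (dot_comm (pv l u v)) in K. lra.
Qed.
Lemma f_luulv a b l n E u v : Hyp a b l n E -> Dab a b u v -> dot (pu (pu l) u v) (pv l u v) = 0.
Proof.
  intros H Hd.
  assert (K := dot_du_eq a b (pu l) (pv l) u v (fun _ => 0) 0 ltac:(smh H) ltac:(smh H) Hd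
    ltac:(intros x Hx; gid H x v (conj Hx (Dab_v _ _ _ _ Hd)); exact G_lulv) (isd_const 0 u)).
  rewrite (smv_schwarz a b l u v (h_l _ _ _ _ _ H) Hd) in K.
  rewrite (dot_comm (pu l u v)), (f_luvlu _ _ _ _ _ _ _ H Hd) in K. lra.
Qed.
Lemma f_lvvlu a b l n E u v : Hyp a b l n E -> Dab a b u v -> dot (pv (pv l) u v) (pu l u v) = - (Derive E u / 2).
Proof.
  intros H Hd.
  assert (K := dot_dv_eq a b (pu l) (pv l) u v (fun _ => 0) 0 ltac:(smh H) ltac:(smh H) Hd
    ltac:(intros y Hy; gid H u y (conj (Dab_u _ _ _ _ Hd) Hy); exact G_lulv) (isd_const 0 v)).
  rewrite (f_luvlv _ _ _ _ _ _ _ H Hd), (dot_comm (pu l u v)) in K. lra.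
Qed.
Lemma f_nvl a b l n E u v : Hyp a b l n E -> Dab a b u v -> dot (pv n u v) (l u v) = 0.
Proof.
  intros H Hd.
  assert (K := dot_dv_eq a b n l u v (fun _ => 0) 0 ltac:(smh H) ltac:(smh H) Hd
    ltac:(intros y Hy; gid H u y (conj (Dab_u _ _ _ _ Hd) Hy); exact G_nl) (isd_const 0 v)).
  gid H u v Hd. lra.
Qed.
Lemma f_nvlu a b l n E u v : Hyp a b l n E -> Dab a b u v -> dot (pv n u v) (pu l u v) = 0.
Proof.
  intros H Hd.
  assert (K := dot_dv_eq a b n (pu l) u v (fun _ => 0) 0 ltac:(smh H) ltac:(smh H) Hd
    ltac:(intros y Hy; gid H u y (conj (Dab_u _ _ _ _ Hd) Hy); exact G_nlu) (isd_const 0 v)).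
  gid H u v Hd. rewrite (dot_comm (n u v)) in K. lra.
Qed.
Lemma f_nvlv a b l n E u v : Hyp a b l n E -> Dab a b u v -> dot (pv n u v) (pv l u v) = 1.
Proof.
  intros H Hd.
  assert (K := dot_dv_eq a b n (pv l) u v (fun _ => 0) 0 ltac:(smh H) ltac:(smh H) Hd
    ltac:(intros y Hy; gid H u y (conj (Dab_u _ _ _ _ Hd) Hy); exact G_nlv) (isd_const 0 v)).
  gid H u v Hd. rewrite (dot_comm (n u v)) in K. lra.
Qed.
Lemma f_nvn a b l n E u v : Hyp a b l n E -> Dab a b u v -> dot (pv n u v) (n u v) = 0.
Proof.
  intros H Hd.
  assert (K := dot_dv_eq a b n n u v (fun _ => 1) 0 ltac:(smh H) ltac:(smh H) Hd
    ltac:(intros y Hy; gid H u y (conj (Dab_u _ _ _ _ Hd) Hy); exact G_nn) (isd_const 1 v)).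
  rewrite (dot_comm (n u v)) in K. lra.
Qed.

Lemma frame_det a b l n E u v : Hyp a b l n E -> Dab a b u v ->
  det4 (l u v) (pu l u v) (pv l u v) (n u v) <> 0.
Proof.
  intros H Hd Hz.
  assert (K := det4_gram (l u v) (pu l u v) (pv l u v) (n u v)).
  rewrite Hz in K. gid H u v Hd.
  rewrite (dot_comm (l u v) (pu l u v)), (dot_comm (l u v) (pv l u v)), (dot_comm (l u v) (n u v)),
    (dot_comm (pu l u v) (n u v)), (dot_comm (pv l u v) (n u v)), (dot_comm (pv l u v) (pu l u v)) in K.
  rewrite (f_lul _ _ _ _ _ _ _ H Hd), (f_lvl _ _ _ _ _ _ _ H Hd) in K.
  rewrite G_ll, G_lulu, G_lvlv, G_lulv, G_nn, G_nl, G_nlu, G_nlv in K.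
  unfold det4, det3, mk4, x1, x2, x3, x4 in K; simpl in K.
  assert (HE := h_E _ _ _ _ _ H u (Dab_u _ _ _ _ Hd)). nra.
Qed.

Definition cf (E : R -> R) (u : R) : R := Derive E u / (2 * E u).

Ltac frw H l n u v Hd :=
  rewrite ?dot_vadd_l, ?dot_vscal_l;
  rewrite ?(dot_comm (l u v) (pu l u v)), ?(dot_comm (l u v) (pv l u v)), ?(dot_comm (l u v) (n u v)),
    ?(dot_comm (pu l u v) (n u v)), ?(dot_comm (pv l u v) (n u v)), ?(dot_comm (pv l u v) (pu l u v));
  let G := fresh in
  destruct (h_id _ _ _ _ _ H u v Hd) as
    (G_ll & G_lulu & G_lvlv & G_lulv & G_nn & G_nl & G_nlu & G_nlv & G_luun & G_luvn & G_lvvn);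
  rewrite ?G_ll, ?G_lulu, ?G_lvlv, ?G_lulv, ?G_nn, ?G_nl, ?G_nlu, ?G_nlv, ?G_luun, ?G_luvn, ?G_lvvn;
  rewrite ?(f_lul _ _ _ _ _ _ _ H Hd), ?(f_lvl _ _ _ _ _ _ _ H Hd).

Lemma X_luv a b l n E u v : Hyp a b l n E -> Dab a b u v ->
  pv (pu l) u v = vscal (cf E u) (pv l u v).
Proof.
  intros H Hd. assert (HE := h_E _ _ _ _ _ H u (Dab_u _ _ _ _ Hd)).
  apply (frame_eq (l u v) (pu l u v) (pv l u v) (n u v)); [exact (frame_det _ _ _ _ _ _ _ H Hd)| | | |];
  rewrite ?(f_luvl _ _ _ _ _ _ _ H Hd), ?(f_luvlu _ _ _ _ _ _ _ H Hd), ?(f_luvlv _ _ _ _ _ _ _ H Hd);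
  frw H l n u v Hd; unfold cf; field; lra.
Qed.

Lemma X_lvv a b l n E u v : Hyp a b l n E -> Dab a b u v ->
  pv (pv l) u v = vadd (vadd (vscal (- cf E u) (pu l u v)) (vscal (- E u) (l u v))) (vscal (-1) (n u v)).
Proof.
  intros H Hd. assert (HE := h_E _ _ _ _ _ H u (Dab_u _ _ _ _ Hd)).
  apply (frame_eq (l u v) (pu l u v) (pv l u v) (n u v)); [exact (frame_det _ _ _ _ _ _ _ H Hd)| | | |];
  rewrite ?(f_lvvl _ _ _ _ _ _ _ H Hd), ?(f_lvvlu _ _ _ _ _ _ _ H Hd), ?(f_lvvlv _ _ _ _ _ _ _ H Hd);
  frw H l n u v Hd; unfold cf; field; lra.
Qed.

Lemma X_luu a b l n E u v : Hyp a b l n E -> Dab a b u v ->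
  pu (pu l) u v = vadd (vadd (vscal (cf E u) (pu l u v)) (vscal (- E u) (l u v))) (n u v).
Proof.
  intros H Hd. assert (HE := h_E _ _ _ _ _ H u (Dab_u _ _ _ _ Hd)).
  apply (frame_eq (l u v) (pu l u v) (pv l u v) (n u v)); [exact (frame_det _ _ _ _ _ _ _ H Hd)| | | |];
  rewrite ?(f_luul _ _ _ _ _ _ _ H Hd), ?(f_luulu _ _ _ _ _ _ _ H Hd), ?(f_luulv _ _ _ _ _ _ _ H Hd);
  frw H l n u v Hd; unfold cf; field; lra.
Qed.

Lemma X_nv a b l n E u v : Hyp a b l n E -> Dab a b u v ->
  pv n u v = vscal (/ E u) (pv l u v).
Proof.
  intros H Hd. assert (HE := h_E _ _ _ _ _ H u (Dab_u _ _ _ _ Hd)).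
  apply (frame_eq (l u v) (pu l u v) (pv l u v) (n u v)); [exact (frame_det _ _ _ _ _ _ _ H Hd)| | | |];
  rewrite ?(f_nvl _ _ _ _ _ _ _ H Hd), ?(f_nvlu _ _ _ _ _ _ _ H Hd), ?(f_nvlv _ _ _ _ _ _ _ H Hd), ?(f_nvn _ _ _ _ _ _ _ H Hd);
  frw H l n u v Hd; field; lra.
Qed.

Lemma isd_div2 (f : R -> R) x df : is_derive f x df -> is_derive (fun y => f y / 2) x (df / 2).
Proof.
  intros Hf. apply (is_derive_ext (fun y => / 2 * f y)). { intros; unfold Rdiv; rring. }
  eapply isd_eq; [apply isd_scal; exact Hf|]. unfold Rdiv; rring.
Qed.

Lemma E2_isd a b l n E u : Hyp a b l n E -> -a < u < a ->
  is_derive (Derive E) u (Derive (Derive E) u).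
Proof.
  intros H Hu. assert (Hd : Dab a b u 0) by (split; auto; pose proof (h_b _ _ _ _ _ H); lra).
  apply isd_Derive. eexists.
  apply (isd_ext_int (-a) a (fun x => 2 * dot (pu (pu l) x 0) (pu l x 0))); [exact Hu| |].
  - intros y Hy. symmetry. apply (dE_eq _ _ _ _ _ _ _ H). split; auto. apply Hd.
  - apply isd_scal. apply (dot_du _ (pu (pu l)) (pu l) u 0 ltac:(smh H) ltac:(smh H) Hd).
Qed.

Lemma E2_eq a b l n E u : Hyp a b l n E -> -a < u < a ->
  Derive (Derive E) u = Derive E u ^ 2 / E u - 2 * E u ^ 2 + 2.
Proof.
  intros H Hu. assert (Hd : Dab a b u 0) by (split; auto; pose proof (h_b _ _ _ _ _ H); lra).
  assert (HE := h_E _ _ _ _ _ H u Hu).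
  assert (K1 := dot_du_eq a b (pv (pu l)) (pv l) u 0 (fun x => Derive E x / 2) (Derive (Derive E) u / 2)
     ltac:(smh H) ltac:(smh H) Hd
     ltac:(intros x Hx; apply (f_luvlv _ _ _ _ _ _ _ H); split; auto; apply Hd)
     (isd_div2 _ _ _ (E2_isd _ _ _ _ _ _ H Hu))).
  assert (K2 := dot_dv_eq a b (pu (pu l)) (pv l) u 0 (fun _ => 0) 0
     ltac:(smh H) ltac:(smh H) Hd
     ltac:(intros y Hy; apply (f_luulv _ _ _ _ _ _ _ H); split; auto)
     (isd_const 0 0)).
  assert (S1 := smv_schwarz a b (pu l) u 0 ltac:(smh H) Hd).
  assert (S2 := smv_schwarz a b l u 0 ltac:(smh H) Hd).
  rewrite S1 in K1. rewrite S2 in K1.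
  assert (K3 : Derive (Derive E) u / 2 = - dot (pu (pu l) u 0) (pv (pv l) u 0) + dot (pv (pu l) u 0) (pv (pu l) u 0)) by lra.
  rewrite (dot_comm (pu (pu l) u 0)) in K3.
  rewrite (X_lvv _ _ _ _ _ _ _ H Hd) in K3.
  rewrite (X_luv _ _ _ _ _ _ _ H Hd) in K3.
  rewrite ?dot_vadd_l, ?dot_vscal_l in K3.
  rewrite (dot_comm (pu l u 0)), (dot_comm (l u 0)), (dot_comm (n u 0)), (dot_comm (pv l u 0) (vscal _ _)) in K3.
  rewrite dot_vscal_l in K3.
  rewrite (f_luulu _ _ _ _ _ _ _ H Hd), (f_luul _ _ _ _ _ _ _ H Hd) in K3.
  gid H u 0 Hd. rewrite G_luun, G_lvlv in K3.
  unfold cf in K3.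
  replace (Derive (Derive E) u) with (2 * (Derive (Derive E) u / 2)) by field.
  rewrite K3. field. lra.
Qed.

Lemma z_isd a b l n E u : Hyp a b l n E -> -a < u < a ->
  is_derive (fun x => ln (E x)) u (Derive E u / E u).
Proof.
  intros H Hu. assert (HE := h_E _ _ _ _ _ H u Hu).
  eapply isd_eq. apply (isd_comp ln E u (/ E u) (Derive E u)).
  - apply is_derive_ln; auto.
  - apply (E_isd _ _ _ _ _ _ H Hu).
  - unfold Rdiv; rring.
Qed.

Lemma z2_isd a b l n E u : Hyp a b l n E -> -a < u < a ->
  is_derive (Derive (fun x => ln (E x))) u ((Derive (Derive E) u * E u - Derive E u * Derive E u) / E u ^ 2).
Proof.
  intros H Hu. assert (HE := h_E _ _ _ _ _ H u Hu).
  apply (isd_ext_int (-a) a (fun x => Derive E x / E x)); [exact Hu| |].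
  - intros y Hy. symmetry. apply is_derive_unique. apply (z_isd _ _ _ _ _ _ H Hy).
  - apply is_derive_div; [apply (E2_isd _ _ _ _ _ _ H Hu)|apply (E_isd _ _ _ _ _ _ H Hu)|lra].
Qed.

Lemma z_ode a b l n E u : Hyp a b l n E -> -a < u < a ->
  Derive (Derive (fun x => ln (E x))) u + 4 * sinh (ln (E u)) = 0.
Proof.
  intros H Hu. assert (HE := h_E _ _ _ _ _ H u Hu).
  rewrite (is_derive_unique _ _ _ (z2_isd _ _ _ _ _ _ H Hu)).
  rewrite (E2_eq _ _ _ _ _ _ H Hu).
  unfold sinh. rewrite exp_Ropp, exp_ln by lra. field. lra.
Qed.

Definition is_pr (pr : V4 -> R) : Prop := pr = x1 \/ pr = x2 \/ pr = x3 \/ pr = x4.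

Lemma pr_vadd pr w w' : is_pr pr -> pr (vadd w w') = pr w + pr w'.
Proof. intros [ -> | [ -> | [ -> | -> ] ] ]; reflexivity. Qed.
Lemma pr_vscal pr k w : is_pr pr -> pr (vscal k w) = k * pr w.
Proof. intros [ -> | [ -> | [ -> | -> ] ] ]; reflexivity. Qed.

Lemma pr_isd_u (D : R -> R -> Prop) pr L u v : is_pr pr -> smooth_on_v D L -> D u v ->
  is_derive (fun x => pr (L x v)) u (pr (pu L u v)).
Proof.
  intros Hp HL Hd. destruct (smv_isd_u D L u v HL Hd) as [F1 [F2 [F3 F4]]].
  destruct Hp as [ -> | [ -> | [ -> | -> ] ] ]; assumption.
Qed.
Lemma pr_isd_v (D : R -> R -> Prop) pr L u v : is_pr pr -> smooth_on_v D L -> D u v ->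
  is_derive (fun y => pr (L u y)) v (pr (pv L u v)).
Proof.
  intros Hp HL Hd. destruct (smv_isd_v D L u v HL Hd) as [F1 [F2 [F3 F4]]].
  destruct Hp as [ -> | [ -> | [ -> | -> ] ] ]; assumption.
Qed.

Lemma pr_eq (w w' : V4) : (forall pr, is_pr pr -> pr w = pr w') -> w = w'.
Proof.
  intros Hp. apply V4_eq; apply Hp; unfold is_pr; tauto.
Qed.

Lemma harm_unique (lo hi k : R) (Y Y1 : R -> R) :
  lo < 0 < hi -> 0 < k ->
  (forall y, lo < y < hi -> is_derive Y y (Y1 y)) ->
  (forall y, lo < y < hi -> is_derive Y1 y (- k * Y y)) ->
  Y 0 = 0 -> Y1 0 = 0 ->
  forall y, lo < y < hi -> Y y = 0.
Proof.
  intros H0 Hk HY HY1 Y0 Y10 y Hy.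
  assert (C : (fun x => k * (Y x * Y x) + Y1 x * Y1 x) y = (fun x => k * (Y x * Y x) + Y1 x * Y1 x) 0).
  { apply (const_int lo hi (fun x => k * (Y x * Y x) + Y1 x * Y1 x) 0 y); auto; try lra.
    intros z Hz. eapply isd_eq.
    - apply isd_plus; [apply isd_scal; apply isd_mult; apply HY; auto|apply isd_mult; apply HY1; auto].
    - rring. }
  simpl in C. rewrite Y0, Y10 in C.
  assert (Y y * Y y = 0) by nra. nra.
Qed.

Definition gf (E : R -> R) (u : R) : R := exp (- ln (E u) / 2).

Lemma gf_pos E u : 0 < gf E u.
Proof. apply exp_pos. Qed.

Lemma gf_sq E u : 0 < E u -> gf E u * gf E u * E u = 1.
Proof.
  intros HE. unfold gf. rewrite <- exp_plus.
  replace (- ln (E u) / 2 + - ln (E u) / 2) with (- ln (E u)) by field.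
  rewrite exp_Ropp, exp_ln by lra. field. lra.
Qed.

Lemma gf_isd a b l n E u : Hyp a b l n E -> -a < u < a ->
  is_derive (gf E) u (- gf E u * cf E u).
Proof.
  intros H Hu. assert (HE := h_E _ _ _ _ _ H u Hu). unfold gf, cf.
  eapply isd_eq.
  - apply (isd_comp exp (fun x => - ln (E x) / 2)).
    + apply is_derive_exp.
    + apply (is_derive_ext (fun x => (-1/2) * ln (E x))). { intros; unfold Rdiv; rring. }
      apply isd_scal. apply (z_isd _ _ _ _ _ _ H Hu).
  - rfield. lra.
Qed.

Lemma cf_isd a b l n E u : Hyp a b l n E -> -a < u < a ->
  is_derive (cf E) u (/ E u - E u).
Proof.
  intros H Hu. assert (HE := h_E _ _ _ _ _ H u Hu). unfold cf.
  eapply isd_eq.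
  - apply is_derive_div.
    + apply (E2_isd _ _ _ _ _ _ H Hu).
    + apply isd_scal. apply (E_isd _ _ _ _ _ _ H Hu).
    + lra.
  - rewrite (E2_eq _ _ _ _ _ _ H Hu). rfield. lra.
Qed.

Lemma energy a b l n E u : Hyp a b l n E -> -a < u < a ->
  cf E u ^ 2 + E u + / E u = cf E 0 ^ 2 + E 0 + / E 0.
Proof.
  intros H Hu. assert (H0 : -a < 0 < a) by (pose proof (h_a _ _ _ _ _ H); lra).
  apply (const_int (-a) a (fun x => cf E x ^ 2 + E x + / E x) 0 u); auto.
  intros x Hx. assert (HE := h_E _ _ _ _ _ H x Hx).
  eapply isd_eq.
  - apply isd_plus; [apply isd_plus|].
    + apply (is_derive_ext (fun y => cf E y * cf E y)). { intros; rring. }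
      apply isd_mult; apply (cf_isd _ _ _ _ _ _ H Hx).
    + apply (E_isd _ _ _ _ _ _ H Hx).
    + apply is_derive_inv; [apply (E_isd _ _ _ _ _ _ H Hx)|lra].
  - unfold cf. rfield. lra.
Qed.

Lemma exp_half x : 0 < x -> exp (ln x / 2) = sqrt x.
Proof.
  intros Hx. rewrite <- (sqrt_square (exp (ln x / 2))) by (left; apply exp_pos).
  f_equal. rewrite <- exp_plus. replace (ln x / 2 + ln x / 2) with (ln x) by field.
  apply exp_ln; auto.
Qed.
Lemma exp_mhalf x : 0 < x -> exp (- ln x / 2) = / sqrt x.
Proof.
  intros Hx. replace (- ln x / 2) with (- (ln x / 2)) by field. rewrite exp_Ropp, exp_half; auto.
Qed.

Definition Avec (s t : R) : V4 := vadd (vadd (vscal (exp (s/2)) e1) (vscal t e2)) (vscal (exp (- s / 2)) e4).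
Definition qv (s t beta y : R) : V4 :=
  vscal (/ beta ^ 2) (vadd (vscal (cos (beta * y)) (Avec s t)) (vscal (beta * sin (beta * y)) e3)).
Definition Qp (s t beta y : R) : V4 :=
  vadd (vscal (- sin (beta * y) / beta) (Avec s t)) (vscal (cos (beta * y)) e3).

Lemma isd_lin beta y : is_derive (fun y => beta * y) y beta.
Proof. eapply isd_eq. apply (isd_scal (fun y => y)). apply isd_id. rring. Qed.

Lemma isd_cosb beta y : is_derive (fun y => cos (beta * y)) y (- beta * sin (beta * y)).
Proof.
  eapply isd_eq. apply (isd_comp cos (fun y => beta * y) y (- sin (beta * y)) beta).
  apply is_derive_cos. apply isd_lin. rring.
Qed.
Lemma isd_sinb beta y : is_derive (fun y => sin (beta * y)) y (beta * cos (beta * y)).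
Proof.
  eapply isd_eq. apply (isd_comp sin (fun y => beta * y) y (cos (beta * y)) beta).
  apply is_derive_sin. apply isd_lin. rring.
Qed.

Lemma pr_qv pr s t beta y : is_pr pr ->
  pr (qv s t beta y) = / beta ^ 2 * (cos (beta * y) * pr (Avec s t) + beta * sin (beta * y) * pr e3).
Proof. intros [ -> | [ -> | [ -> | -> ] ] ]; reflexivity. Qed.
Lemma pr_Qp pr s t beta y : is_pr pr ->
  pr (Qp s t beta y) = - sin (beta * y) / beta * pr (Avec s t) + cos (beta * y) * pr e3.
Proof. intros [ -> | [ -> | [ -> | -> ] ] ]; reflexivity. Qed.

Lemma qv_isd pr s t beta y : is_pr pr -> beta <> 0 ->
  is_derive (fun y => pr (qv s t beta y)) y (pr (Qp s t beta y)).
Proof.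
  intros Hp Hb.
  apply (is_derive_ext (fun y => / beta ^ 2 * (cos (beta * y) * pr (Avec s t) + beta * (sin (beta * y) * pr e3)))).
  { intros y'. rewrite (pr_qv pr s t beta y' Hp). rring. }
  eapply isd_eq.
  - apply isd_scal. apply isd_plus.
    + apply (isd_mult (fun y => cos (beta * y)) (fun _ => pr (Avec s t))); [apply isd_cosb|apply isd_const].
    + apply (isd_scal (fun y => sin (beta * y) * pr e3)).
      apply (isd_mult (fun y => sin (beta * y)) (fun _ => pr e3)); [apply isd_sinb|apply isd_const].
  - symmetry. etransitivity; [apply (pr_Qp pr s t beta y Hp)|]. rfield. auto.
Qed.

Lemma Qp_isd pr s t beta y : is_pr pr -> beta <> 0 ->
  is_derive (fun y => pr (Qp s t beta y)) y (- beta ^ 2 * pr (qv s t beta y)).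
Proof.
  intros Hp Hb.
  apply (is_derive_ext (fun y => (- / beta) * (sin (beta * y) * pr (Avec s t)) + cos (beta * y) * pr e3)).
  { intros y'. rewrite (pr_Qp pr s t beta y' Hp). unfold Rdiv. rring. }
  eapply isd_eq.
  - apply isd_plus.
    + apply isd_scal. apply (isd_mult (fun y => sin (beta * y)) (fun _ => pr (Avec s t))); [apply isd_sinb|apply isd_const].
    + apply (isd_mult (fun y => cos (beta * y)) (fun _ => pr e3)); [apply isd_cosb|apply isd_const].
  - symmetry. etransitivity; [apply Rmult_eq_compat_l; apply (pr_qv pr s t beta y Hp)|]. rfield. auto.
Qed.

Lemma Dab_0v a b l n E v : Hyp a b l n E -> -b < v < b -> Dab a b 0 v.
Proof. intros H Hv. split; auto. pose proof (h_a _ _ _ _ _ H); lra. Qed.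

Lemma S1 a b l n E pr u v : Hyp a b l n E -> is_pr pr -> -a < u < a -> -b < v < b ->
  gf E u * pr (pv l u v) = gf E 0 * pr (pv l 0 v).
Proof.
  intros H Hp Hu Hv.
  apply (const_int (-a) a (fun x => gf E x * pr (pv l x v)) 0 u); auto;
    [|pose proof (h_a _ _ _ _ _ H); lra].
  intros x Hx. assert (Hd : Dab a b x v) by (split; auto).
  eapply isd_eq.
  - apply isd_mult; [apply (gf_isd _ _ _ _ _ _ H Hx)|apply (pr_isd_u _ pr (pv l) x v Hp ltac:(smh H) Hd)].
  - rewrite (smv_schwarz a b l x v (h_l _ _ _ _ _ H) Hd), (X_luv _ _ _ _ _ _ _ H Hd), pr_vscal by auto.
    rring.
Qed.

Definition B2 (E : R -> R) : R := cf E 0 ^ 2 + E 0 + / E 0.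

Lemma S2 a b l n E pr v : Hyp a b l n E -> is_pr pr -> -b < v < b ->
  is_derive (fun y => pr (pv (pv l) 0 y)) v (- B2 E * pr (pv l 0 v)).
Proof.
  intros H Hp Hv. assert (Hd := Dab_0v _ _ _ _ _ _ H Hv).
  assert (HE := h_E _ _ _ _ _ H 0 (Dab_u _ _ _ _ Hd)).
  apply (isd_ext_int (-b) b (fun y => - cf E 0 * pr (pu l 0 y) + - E 0 * pr (l 0 y) + -1 * pr (n 0 y))); auto.
  - intros y Hy. rewrite (X_lvv _ _ _ _ _ _ _ H (Dab_0v _ _ _ _ _ _ H Hy)), !pr_vadd, !pr_vscal by auto.
    reflexivity.
  - eapply isd_eq.
    + apply isd_plus; [apply isd_plus|]; apply isd_scal.
      * apply (pr_isd_v _ pr (pu l) 0 v Hp ltac:(smh H) Hd).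
      * apply (pr_isd_v _ pr l 0 v Hp ltac:(smh H) Hd).
      * apply (pr_isd_v _ pr n 0 v Hp ltac:(smh H) Hd).
    + rewrite (X_luv _ _ _ _ _ _ _ H Hd), (X_nv _ _ _ _ _ _ _ H Hd), !pr_vscal by auto.
      unfold B2. rfield. lra.
Qed.

Lemma B2_pos a b l n E : Hyp a b l n E -> 0 < B2 E.
Proof.
  intros H. assert (HE := h_E _ _ _ _ _ H 0 ltac:(pose proof (h_a _ _ _ _ _ H); lra)).
  unfold B2. assert (0 < / E 0) by (apply Rinv_0_lt_compat; auto). nra.
Qed.

Ltac prcases Hp := destruct Hp as [ -> | [ -> | [ -> | -> ] ] ].

Lemma S3 a b l n E pr v : Hyp a b l n E -> is_pr pr -> -b < v < b ->
  l 0 0 = e1 -> pu l 0 0 = vscal (sqrt (E 0)) e2 ->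
  pv l 0 0 = vscal (sqrt (E 0)) e3 -> n 0 0 = e4 ->
  gf E 0 * pr (pv l 0 v) = pr (Qp (ln (E 0)) (cf E 0) (sqrt (B2 E)) v).
Proof.
  intros H Hp Hv hl0 hlu0 hlv0 hn0.
  set (s := ln (E 0)). set (t := cf E 0). set (beta := sqrt (B2 E)).
  assert (HB := B2_pos _ _ _ _ _ H).
  assert (Hbeta : 0 < beta) by (apply sqrt_lt_R0; auto).
  assert (Hbeta2 : beta ^ 2 = B2 E) by (unfold beta; simpl; rewrite Rmult_1_r; apply sqrt_sqrt; lra).
  assert (H0 : -b < 0 < b) by (pose proof (h_b _ _ _ _ _ H); lra).
  enough (K : gf E 0 * pr (pv l 0 v) - pr (Qp s t beta v) = 0) by lra.
  apply (harm_unique (-b) b (B2 E) (fun y => gf E 0 * pr (pv l 0 y) - pr (Qp s t beta y))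
    (fun y => gf E 0 * pr (pv (pv l) 0 y) + B2 E * pr (qv s t beta y))); auto.
  - intros y Hy. eapply isd_eq.
    + apply isd_minus; [apply isd_scal; apply (pr_isd_v _ pr (pv l) 0 y Hp ltac:(smh H) (Dab_0v _ _ _ _ _ _ H Hy))|].
      apply Qp_isd; auto; lra.
    + rewrite Hbeta2. rring.
  - intros y Hy. eapply isd_eq.
    + apply isd_plus; [apply isd_scal; apply (S2 _ _ _ _ _ _ _ H Hp Hy)|].
      apply isd_scal. apply qv_isd; auto; lra.
    + rring.
  - assert (HE := h_E _ _ _ _ _ H 0 ltac:(pose proof (h_a _ _ _ _ _ H); lra)).
    simpl. rewrite hlv0. unfold gf. fold s. unfold s.
    assert (Hr : 0 < sqrt (E 0)) by (apply sqrt_lt_R0; auto).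
    prcases Hp; unfold Qp, Avec, vadd, vscal, e1, e2, e3, e4, mk4, x1, x2, x3, x4; simpl;
    rewrite ?Rmult_0_r, ?sin_0, ?cos_0, ?exp_half, ?exp_mhalf by auto; field; lra.
  - assert (HE := h_E _ _ _ _ _ H 0 ltac:(pose proof (h_a _ _ _ _ _ H); lra)).
    assert (Hd00 : Dab a b 0 0) by exact (Dab_0v _ _ _ _ _ _ H H0).
    simpl. rewrite (X_lvv _ _ _ _ _ _ _ H Hd00). rewrite hl0, hlu0, hn0.
    unfold gf. fold s. unfold s.
    assert (Hr : 0 < sqrt (E 0)) by (apply sqrt_lt_R0; auto).
    assert (Hr2 : sqrt (E 0) * sqrt (E 0) = E 0) by (apply sqrt_sqrt; lra).
    rewrite <- Hbeta2. unfold t.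
    prcases Hp; unfold qv, Avec, vadd, vscal, e1, e2, e3, e4, mk4, x1, x2, x3, x4; simpl;
    rewrite ?Rmult_0_r, ?sin_0, ?cos_0, ?exp_half, ?exp_mhalf by auto; set (r := sqrt (E 0)) in *; rewrite <- ?Hr2; field; lra.

Qed.

Lemma S4 a b l n E pr u v : Hyp a b l n E -> is_pr pr -> -a < u < a -> -b < v < b ->
  l 0 0 = e1 -> pu l 0 0 = vscal (sqrt (E 0)) e2 ->
  pv l 0 0 = vscal (sqrt (E 0)) e3 -> n 0 0 = e4 ->
  gf E u * (pr (l u v) - pr (l u 0)) =
    pr (qv (ln (E 0)) (cf E 0) (sqrt (B2 E)) v) - pr (qv (ln (E 0)) (cf E 0) (sqrt (B2 E)) 0).
Proof.
  intros H Hp Hu Hv hl0 hlu0 hlv0 hn0.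
  set (s := ln (E 0)). set (t := cf E 0). set (beta := sqrt (B2 E)).
  assert (HB := B2_pos _ _ _ _ _ H).
  assert (Hbeta : 0 < beta) by (apply sqrt_lt_R0; auto).
  assert (H0 : -b < 0 < b) by (pose proof (h_b _ _ _ _ _ H); lra).
  assert (K := const_int (-b) b (fun y => gf E u * (pr (l u y) - pr (l u 0)) - pr (qv s t beta y)) 0 v).
  simpl in K. rewrite Rminus_diag, Rmult_0_r in K.
  enough (gf E u * (pr (l u v) - pr (l u 0)) - pr (qv s t beta v) = 0 - pr (qv s t beta 0)) by lra.
  apply K; auto. clear K.
  intros y Hy. eapply isd_eq.
  - apply isd_minus.
    + apply isd_scal. apply isd_minus; [|apply isd_const].
      apply (pr_isd_v _ pr l u y Hp ltac:(smh H) (conj Hu Hy)).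
    + apply qv_isd; auto; lra.
  - rewrite Rminus_0_r, (S1 _ _ _ _ _ _ _ _ H Hp Hu Hy).
    rewrite (S3 _ _ _ _ _ _ _ H Hp Hy hl0 hlu0 hlv0 hn0). unfold s, t, beta. rring.
Qed.

Lemma S5 a b l n E pr u : Hyp a b l n E -> is_pr pr -> -a < u < a ->
  l 0 0 = e1 -> pu l 0 0 = vscal (sqrt (E 0)) e2 ->
  pv l 0 0 = vscal (sqrt (E 0)) e3 -> n 0 0 = e4 ->
  gf E u * pr (pv (pv l) u 0) = - B2 E * pr (qv (ln (E 0)) (cf E 0) (sqrt (B2 E)) 0).
Proof.
  intros H Hp Hu hl0 hlu0 hlv0 hn0.
  assert (HB := B2_pos _ _ _ _ _ H).
  assert (Hbeta : 0 < sqrt (B2 E)) by (apply sqrt_lt_R0; auto).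
  assert (Hbeta2 : sqrt (B2 E) ^ 2 = B2 E) by (simpl; rewrite Rmult_1_r; apply sqrt_sqrt; lra).
  assert (H0 : -b < 0 < b) by (pose proof (h_b _ _ _ _ _ H); lra).
  assert (K1 : is_derive (fun y => gf E u * pr (pv l u y)) 0 (gf E u * pr (pv (pv l) u 0))).
  { apply isd_scal. apply (pr_isd_v _ pr (pv l) u 0 Hp ltac:(smh H) (conj Hu H0)). }
  assert (K2 : is_derive (fun y => gf E u * pr (pv l u y)) 0
     (- sqrt (B2 E) ^ 2 * pr (qv (ln (E 0)) (cf E 0) (sqrt (B2 E)) 0))).
  { apply (isd_ext_int (-b) b (fun y => pr (Qp (ln (E 0)) (cf E 0) (sqrt (B2 E)) y))); auto.
    - intros y Hy. rewrite (S1 _ _ _ _ _ _ _ _ H Hp Hu Hy).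
      rewrite (S3 _ _ _ _ _ _ _ H Hp Hy hl0 hlu0 hlv0 hn0). reflexivity.
    - apply Qp_isd; auto; lra. }
  rewrite <- (is_derive_unique _ _ _ K1), (is_derive_unique _ _ _ K2), Hbeta2. reflexivity.
Qed.

Definition pf (l : R -> R -> V4) (E : R -> R) (u : R) : V4 :=
  vadd (vscal (gf E u) (l u 0)) (vscal (-1) (qv (ln (E 0)) (cf E 0) (sqrt (B2 E)) 0)).
Definition P1 (l : R -> R -> V4) (E : R -> R) (u : R) : V4 :=
  vadd (vscal (- gf E u * cf E u) (l u 0)) (vscal (gf E u) (pu l u 0)).
Definition P2 (l : R -> R -> V4) (E : R -> R) (u : R) : V4 :=
  vadd (vadd (vscal (gf E u * cf E u ^ 2 - gf E u * (/ E u - E u)) (l u 0))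
             (vscal (-2 * gf E u * cf E u) (pu l u 0)))
       (vscal (gf E u) (pu (pu l) u 0)).

Lemma pr_pf pr l E u : is_pr pr ->
  pr (pf l E u) = gf E u * pr (l u 0) + -1 * pr (qv (ln (E 0)) (cf E 0) (sqrt (B2 E)) 0).
Proof. intros [ -> | [ -> | [ -> | -> ] ] ]; reflexivity. Qed.
Lemma pr_P1 pr l E u : is_pr pr ->
  pr (P1 l E u) = (- gf E u * cf E u) * pr (l u 0) + gf E u * pr (pu l u 0).
Proof. intros [ -> | [ -> | [ -> | -> ] ] ]; reflexivity. Qed.
Lemma pr_P2 pr l E u : is_pr pr ->
  pr (P2 l E u) = (gf E u * cf E u ^ 2 - gf E u * (/ E u - E u)) * pr (l u 0)
     + (-2 * gf E u * cf E u) * pr (pu l u 0) + gf E u * pr (pu (pu l) u 0).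
Proof. intros [ -> | [ -> | [ -> | -> ] ] ]; reflexivity. Qed.

Lemma pf_isd a b l n E pr u : Hyp a b l n E -> is_pr pr -> -a < u < a ->
  is_derive (fun x => pr (pf l E x)) u (pr (P1 l E u)).
Proof.
  intros H Hp Hu. assert (Hd : Dab a b u 0) by (split; auto; pose proof (h_b _ _ _ _ _ H); lra).
  apply (is_derive_ext (fun x => gf E x * pr (l x 0) + -1 * pr (qv (ln (E 0)) (cf E 0) (sqrt (B2 E)) 0))).
  { intros x. symmetry. apply pr_pf; auto. }
  eapply isd_eq.
  - apply isd_plus; [apply isd_mult|apply isd_const].
    + apply (gf_isd _ _ _ _ _ _ H Hu).
    + apply (pr_isd_u _ pr l u 0 Hp ltac:(smh H) Hd).
  - rewrite (pr_P1 pr l E u Hp). rring.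
Qed.

Lemma P1_isd a b l n E pr u : Hyp a b l n E -> is_pr pr -> -a < u < a ->
  is_derive (fun x => pr (P1 l E x)) u (pr (P2 l E u)).
Proof.
  intros H Hp Hu. assert (Hd : Dab a b u 0) by (split; auto; pose proof (h_b _ _ _ _ _ H); lra).
  apply (is_derive_ext (fun x => (- gf E x * cf E x) * pr (l x 0) + gf E x * pr (pu l x 0))).
  { intros x. symmetry. apply pr_P1; auto. }
  eapply isd_eq.
  - apply isd_plus; apply isd_mult.
    + apply (is_derive_ext (fun x => - (gf E x * cf E x))). { intros; rring. }
      apply (is_derive_opp (fun x => gf E x * cf E x)).
      apply isd_mult; [apply (gf_isd _ _ _ _ _ _ H Hu)|apply (cf_isd _ _ _ _ _ _ H Hu)].
    + apply (pr_isd_u _ pr l u 0 Hp ltac:(smh H) Hd).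
    + apply (gf_isd _ _ _ _ _ _ H Hu).
    + apply (pr_isd_u _ pr (pu l) u 0 Hp ltac:(smh H) Hd).
  - rewrite (pr_P2 pr l E u Hp). unfold opp; simpl. rring.
Qed.

Lemma Dv_pf a b l n E u : Hyp a b l n E -> -a < u < a -> Dv (pf l E) u = P1 l E u.
Proof.
  intros H Hu. apply V4_eq.
  - exact (is_derive_unique _ _ _ (pf_isd _ _ _ _ _ x1 _ H ltac:(unfold is_pr; tauto) Hu)).
  - exact (is_derive_unique _ _ _ (pf_isd _ _ _ _ _ x2 _ H ltac:(unfold is_pr; tauto) Hu)).
  - exact (is_derive_unique _ _ _ (pf_isd _ _ _ _ _ x3 _ H ltac:(unfold is_pr; tauto) Hu)).
  - exact (is_derive_unique _ _ _ (pf_isd _ _ _ _ _ x4 _ H ltac:(unfold is_pr; tauto) Hu)).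
Qed.

Lemma pf_exd a b l n E u : Hyp a b l n E -> -a < u < a -> ex_derive_v (pf l E) u.
Proof.
  intros H Hu. split; [|split; [|split]]; eexists;
  [exact (pf_isd _ _ _ _ _ x1 _ H ltac:(unfold is_pr; tauto) Hu)
  |exact (pf_isd _ _ _ _ _ x2 _ H ltac:(unfold is_pr; tauto) Hu)
  |exact (pf_isd _ _ _ _ _ x3 _ H ltac:(unfold is_pr; tauto) Hu)
  |exact (pf_isd _ _ _ _ _ x4 _ H ltac:(unfold is_pr; tauto) Hu)].
Qed.

Lemma Dpf_isd a b l n E pr u : Hyp a b l n E -> is_pr pr -> -a < u < a ->
  is_derive (fun y => pr (Dv (pf l E) y)) u (pr (P2 l E u)).
Proof.
  intros H Hp Hu.
  apply (isd_ext_int (-a) a (fun y => pr (P1 l E y))); auto.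
  - intros y Hy. rewrite (Dv_pf _ _ _ _ _ _ H Hy). reflexivity.
  - apply (P1_isd _ _ _ _ _ _ _ H Hp Hu).
Qed.

Lemma Dpf_exd a b l n E u : Hyp a b l n E -> -a < u < a -> ex_derive_v (Dv (pf l E)) u.
Proof.
  intros H Hu. split; [|split; [|split]]; eexists;
  [exact (Dpf_isd _ _ _ _ _ x1 _ H ltac:(unfold is_pr; tauto) Hu)
  |exact (Dpf_isd _ _ _ _ _ x2 _ H ltac:(unfold is_pr; tauto) Hu)
  |exact (Dpf_isd _ _ _ _ _ x3 _ H ltac:(unfold is_pr; tauto) Hu)
  |exact (Dpf_isd _ _ _ _ _ x4 _ H ltac:(unfold is_pr; tauto) Hu)].
Qed.

Lemma DDv_pf a b l n E u : Hyp a b l n E -> -a < u < a -> Dv (Dv (pf l E)) u = P2 l E u.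
Proof.
  intros H Hu. apply V4_eq.
  - exact (is_derive_unique _ _ _ (Dpf_isd _ _ _ _ _ x1 _ H ltac:(unfold is_pr; tauto) Hu)).
  - exact (is_derive_unique _ _ _ (Dpf_isd _ _ _ _ _ x2 _ H ltac:(unfold is_pr; tauto) Hu)).
  - exact (is_derive_unique _ _ _ (Dpf_isd _ _ _ _ _ x3 _ H ltac:(unfold is_pr; tauto) Hu)).
  - exact (is_derive_unique _ _ _ (Dpf_isd _ _ _ _ _ x4 _ H ltac:(unfold is_pr; tauto) Hu)).
Qed.

Lemma pf_ode a b l n E pr u : Hyp a b l n E -> is_pr pr -> -a < u < a ->
  l 0 0 = e1 -> pu l 0 0 = vscal (sqrt (E 0)) e2 ->
  pv l 0 0 = vscal (sqrt (E 0)) e3 -> n 0 0 = e4 ->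
  pr (P2 l E u) + (2 * cf E u) * pr (P1 l E u) + B2 E * pr (pf l E u) = 0.
Proof.
  intros H Hp Hu hl0 hlu0 hlv0 hn0.
  assert (Hd : Dab a b u 0) by (split; auto; pose proof (h_b _ _ _ _ _ H); lra).
  assert (HE := h_E _ _ _ _ _ H u Hu).
  assert (Z := S5 _ _ _ _ _ _ _ H Hp Hu hl0 hlu0 hlv0 hn0).
  assert (En := energy _ _ _ _ _ _ H Hu).
  assert (X1 : pr (pu (pu l) u 0) = cf E u * pr (pu l u 0) + - E u * pr (l u 0) + pr (n u 0)).
  { rewrite (X_luu _ _ _ _ _ _ _ H Hd), !pr_vadd, !pr_vscal by auto. reflexivity. }
  assert (X2 : pr (pv (pv l) u 0) = - cf E u * pr (pu l u 0) + - E u * pr (l u 0) + -1 * pr (n u 0)).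
  { rewrite (X_lvv _ _ _ _ _ _ _ H Hd), !pr_vadd, !pr_vscal by auto. reflexivity. }
  rewrite (pr_P2 pr l E u Hp), (pr_P1 pr l E u Hp), (pr_pf pr l E u Hp), X1.
  assert (N : pr (n u 0) = - pr (pv (pv l) u 0) - cf E u * pr (pu l u 0) - E u * pr (l u 0)) by lra.
  rewrite N.
  set (Q0 := pr (qv (ln (E 0)) (cf E 0) (sqrt (B2 E)) 0)) in *.
  set (L := pr (l u 0)) in *. set (Lu := pr (pu l u 0)) in *. set (Lvv := pr (pv (pv l) u 0)) in *.
  set (g := gf E u) in *. set (c := cf E u) in *.
  assert (HB : B2 E = c ^ 2 + E u + / E u) by (unfold B2; rewrite <- En; reflexivity).
  transitivity (g * L * (B2 E - (c ^ 2 + E u + / E u)) - (g * Lvv + B2 E * Q0)).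
  - field. lra.
  - rewrite Z, HB. field. lra.
Qed.

Definition G (al w : R) : R := al ^ 2 * cos w ^ 2 + sin w ^ 2.
Definition Gd (al w : R) : R := 2 * (1 - al ^ 2) * sin w * cos w.

Lemma G_ge1 al w : 1 <= al -> 1 <= G al w.
Proof.
  intros Ha. unfold G. assert (K := sin2_cos2 w). unfold Rsqr in K.
  assert (H1 : 0 <= cos w * cos w) by nra. assert (H2 : 1 <= al * al) by nra.
  assert (H3 : al * al * (cos w * cos w) >= cos w * cos w) by nra. simpl. nra.
Qed.
Lemma G_le al w : 1 <= al -> G al w <= al ^ 2.
Proof.
  intros Ha. unfold G. assert (K := sin2_cos2 w). unfold Rsqr in K.
  assert (H1 : 0 <= sin w * sin w) by nra. assert (H2 : 1 <= al * al) by nra.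
  assert (H3 : al * al * (sin w * sin w) >= sin w * sin w) by nra. simpl. nra.
Qed.

Lemma G_isd al w : is_derive (G al) w (Gd al w).
Proof.
  unfold G, Gd. eapply isd_eq.
  - apply isd_plus.
    + apply isd_scal. apply (is_derive_ext (fun w => cos w * cos w)). { intros; rring. }
      apply isd_mult; apply is_derive_cos.
    + apply (is_derive_ext (fun w => sin w * sin w)). { intros; rring. }
      apply isd_mult; apply is_derive_sin.
  - rring.
Qed.

Lemma Gd_isd al w : is_derive (Gd al) w (2 * (1 - al ^ 2) * (cos w ^ 2 - sin w ^ 2)).
Proof.
  unfold Gd. eapply isd_eq.
  - apply (is_derive_ext (fun w => 2 * (1 - al ^ 2) * (sin w * cos w))). { intros; rring. }
    apply isd_scal. apply isd_mult; [apply is_derive_sin|apply is_derive_cos].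
  - rring.
Qed.

Lemma finv_isd al x : 1 <= al ->
  is_derive (fun t => / sqrt (G al t)) x (- (Gd al x / (2 * sqrt (G al x))) / sqrt (G al x) ^ 2).
Proof.
  intros Ha. assert (HG := G_ge1 al x Ha).
  apply (is_derive_inv (fun t => sqrt (G al t))).
  - apply (is_derive_sqrt (G al)); [apply G_isd|lra].
  - assert (0 < sqrt (G al x)) by (apply sqrt_lt_R0; lra). lra.
Qed.

Lemma finv_cont al x : 1 <= al -> continuous (fun t => / sqrt (G al t)) x.
Proof.
  intros Ha. apply (ex_derive_continuous (K:=R_AbsRing) (V:=R_NormedModule)).
  eexists. apply finv_isd; auto.
Qed.

Lemma h_isd al x : 1 <= al -> is_derive (h_fun al) x (sqrt al / sqrt (G al x)).
Proof.
  intros Ha. unfold h_fun.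
  eapply isd_eq.
  - apply isd_scal.
    apply (is_derive_RInt (fun t => / sqrt (G al t)) (RInt (fun t => / sqrt (G al t)) 0) 0 x).
    + apply filter_forall. intros b0. apply (RInt_correct (V:=R_CompleteNormedModule)). apply (ex_RInt_continuous (V:=R_CompleteNormedModule)).
      intros; apply finv_cont; auto.
    + apply finv_cont; auto.
  - unfold Rdiv. rring.
Qed.

Lemma h_0 al : h_fun al 0 = 0.
Proof. unfold h_fun. rewrite RInt_point. unfold zero; simpl. ring. Qed.

Lemma sqrtG_bounds al x : 1 <= al -> 1 <= sqrt (G al x) <= al.
Proof.
  intros Ha. split.
  - rewrite <- sqrt_1. apply sqrt_le_1_alt. apply G_ge1; auto.
  - assert (K := G_le al x Ha). simpl in K. rewrite Rmult_1_r in K.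
    apply Rle_trans with (sqrt (al * al)); [apply sqrt_le_1_alt; lra|rewrite sqrt_square; lra].
Qed.

Lemma hd_bounds al x : 1 <= al -> sqrt al / al <= sqrt al / sqrt (G al x) <= sqrt al.
Proof.
  intros Ha. destruct (sqrtG_bounds al x Ha) as [B1 B2].
  assert (Hs : 0 < sqrt al) by (apply sqrt_lt_R0; lra).
  split.
  - unfold Rdiv. apply Rmult_le_compat_l; [lra|]. apply Rinv_le_contravar; lra.
  - unfold Rdiv. rewrite <- (Rmult_1_r (sqrt al)) at 2. apply Rmult_le_compat_l; [lra|].
    rewrite <- Rinv_1. apply Rinv_le_contravar; lra.
Qed.

Lemma h_incr al x y : 1 <= al -> x < y -> h_fun al x < h_fun al y.
Proof.
  intros Ha Hxy.
  destruct (mvt_int (x - 1) (y + 1) (h_fun al) (fun w => sqrt al / sqrt (G al w)) x y) as [c [Hc K]];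
    [intros; apply h_isd; auto|lra|lra|].
  destruct (hd_bounds al c Ha) as [B1 _].
  assert (0 < sqrt al / al) by (apply Rdiv_lt_0_compat; [apply sqrt_lt_R0|]; lra).
  nra.
Qed.

Lemma h_lower al x : 1 <= al -> 0 <= x -> sqrt al / al * x <= h_fun al x.
Proof.
  intros Ha Hx. destruct (Req_dec x 0) as [->|Hx0]. { rewrite h_0. lra. }
  destruct (mvt_int (-1) (x + 1) (h_fun al) (fun w => sqrt al / sqrt (G al w)) 0 x) as [c [Hc K]];
    [intros; apply h_isd; auto|lra|lra|].
  rewrite h_0 in K. destruct (hd_bounds al c Ha) as [B1 _]. nra.
Qed.
Lemma h_upper al x : 1 <= al -> x <= 0 -> h_fun al x <= sqrt al / al * x.
Proof.
  intros Ha Hx. destruct (Req_dec x 0) as [->|Hx0]. { rewrite h_0. lra. }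
  destruct (mvt_int (x - 1) 1 (h_fun al) (fun w => sqrt al / sqrt (G al w)) 0 x) as [c [Hc K]];
    [intros; apply h_isd; auto|lra|lra|].
  rewrite h_0 in K. destruct (hd_bounds al c Ha) as [B1 _]. nra.
Qed.

Lemma h_cont al : 1 <= al -> continuity (h_fun al).
Proof. intros Ha x. apply (isd_continuity _ x _ (h_isd al x Ha)). Qed.

Lemma h_surj al y : 1 <= al -> {x : R | h_fun al x = y}.
Proof.
  intros Ha.
  assert (Hs : 0 < sqrt al) by (apply sqrt_lt_R0; lra).
  set (A := Rabs y * (al / sqrt al) + 1).
  assert (HA : 0 <= A) by (unfold A; assert (0 <= Rabs y) by apply Rabs_pos;
     assert (0 < al / sqrt al) by (apply Rdiv_lt_0_compat; lra); nra).
  assert (K1 := h_lower al A Ha HA). assert (K2 := h_upper al (- A) Ha ltac:(lra)).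
  assert (Hc : sqrt al / al * A = Rabs y + sqrt al / al) by (unfold A; field; lra).
  assert (0 < sqrt al / al) by (apply Rdiv_lt_0_compat; lra).
  assert (Hy1 := Rle_abs y). assert (Hy2 := Rabs_Ropp y). assert (Hy3 := Rle_abs (- y)).
  assert (L1 : h_fun al (- A) <= y) by nra.
  assert (L2 : y <= h_fun al A) by nra.
  destruct (IVT_gen (h_fun al) (- A) A y (h_cont al Ha)) as [x [_ Hx]].
  - unfold Rmin, Rmax. destruct (Rle_dec (h_fun al (- A)) (h_fun al A)); lra.
  - exists x; exact Hx.
Qed.

Lemma h_inj al x y : 1 <= al -> h_fun al x = h_fun al y -> x = y.
Proof.
  intros Ha Hxy. destruct (Rtotal_order x y) as [H|[H|H]]; auto.
  - apply (h_incr al) in H; auto; lra.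
  - apply (h_incr al) in H; auto; lra.
Qed.

Lemma G_poly al w :
  2 * G al w * (2 * (1 - al ^ 2) * (cos w ^ 2 - sin w ^ 2)) - Gd al w ^ 2 = -4 * (G al w ^ 2 - al ^ 2).
Proof.
  unfold G, Gd. assert (K := sin2_cos2 w). unfold Rsqr in K.
  apply Rminus_diag_uniq.
  transitivity (4 * al ^ 2 * (cos w * cos w + sin w * sin w - 1) * (cos w * cos w + sin w * sin w + 1)).
  - ring.
  - rewrite (Rplus_comm (cos w * cos w)), K. ring.
Qed.

Definition zeta (al w : R) : R := ln (G al w / al).
Definition Yz (al w : R) : R := Gd al w / (sqrt al * sqrt (G al w)).

Lemma zeta_isd al w : 1 <= al -> is_derive (zeta al) w (Gd al w / G al w).
Proof.
  intros Ha. assert (HG := G_ge1 al w Ha). unfold zeta.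
  eapply isd_eq.
  - apply (isd_comp ln (fun w => G al w / al) w (/ (G al w / al)) (Gd al w / al)).
    + apply is_derive_ln. apply Rdiv_lt_0_compat; lra.
    + apply (is_derive_ext (fun w => / al * G al w)). { intros; unfold Rdiv; rring. }
      eapply isd_eq; [apply isd_scal; apply G_isd|]. unfold Rdiv; rring.
  - rfield. lra.
Qed.

Lemma Yz_isd al w : 1 <= al ->
  is_derive (Yz al) w (sqrt al / sqrt (G al w) * (-4 * sinh (zeta al w))).
Proof.
  intros Ha. assert (HG := G_ge1 al w Ha).
  assert (Hsa : 0 < sqrt al) by (apply sqrt_lt_R0; lra).
  assert (Hsg : 0 < sqrt (G al w)) by (apply sqrt_lt_R0; lra).
  unfold Yz. eapply isd_eq.
  - apply is_derive_div.
    + apply Gd_isd.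
    + apply (isd_scal (fun w => sqrt (G al w))). apply (is_derive_sqrt (G al)); [apply G_isd|lra].
    + nra.
  - unfold zeta, sinh. rewrite exp_Ropp, exp_ln by (apply Rdiv_lt_0_compat; lra).
    assert (P := G_poly al w).
    set (Gp := 2 * (1 - al ^ 2) * (cos w ^ 2 - sin w ^ 2)) in *.
    set (g := Gd al w) in *. set (Gv := G al w) in *.
    assert (E1 : Gv = sqrt Gv * sqrt Gv) by (rewrite sqrt_sqrt; lra).
    assert (E2 : al = sqrt al * sqrt al) by (rewrite sqrt_sqrt; lra).
    set (sg := sqrt Gv) in *. set (sa := sqrt al) in *.
    match goal with |- ?A1 = ?B1 => change (@eq R A1 B1) end.
    apply Rminus_diag_uniq.
    transitivity ((2 * Gv * Gp - g ^ 2 + 4 * (Gv ^ 2 - al ^ 2)) / (2 * sa * sg ^ 3)).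
    + rewrite E1, E2. field. split; lra.
    + rewrite P. field. split; lra.
Qed.

Lemma exp_le_mono x y : x <= y -> exp x <= exp y.
Proof. intros [H|H]; [left; apply exp_increasing; auto|subst; lra]. Qed.

Lemma exp_lip x y M : exp x <= M -> exp y <= M -> Rabs (exp x - exp y) <= M * Rabs (x - y).
Proof.
  intros Hx Hy.
  destruct (MVT_gen exp y x exp) as [c [Hc K]].
  - intros; apply is_derive_exp.
  - intros z _. apply (isd_continuity _ z _ (is_derive_exp z)).
  - rewrite K, Rabs_mult, (Rabs_pos_eq (exp c)) by (left; apply exp_pos).
    apply Rmult_le_compat_r; [apply Rabs_pos|].
    assert (exp c <= Rmax (exp x) (exp y)).
    { destruct Hc as [H1 H2]. unfold Rmax.
      destruct (Rle_dec (exp x) (exp y)).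
      - apply exp_le_mono. apply Rle_trans with (Rmax y x); auto. unfold Rmax.
        destruct (Rle_dec y x); auto; try lra.
        destruct (Rle_lt_or_eq_dec _ _ r0) as [Hl|Hl]; [apply exp_increasing in Hl; lra|subst; lra].
      - apply exp_le_mono. apply Rle_trans with (Rmax y x); auto. unfold Rmax.
        destruct (Rle_dec y x); [lra|]. assert (x < y) by lra. apply exp_increasing in H. lra. }
    apply Rle_trans with (Rmax (exp x) (exp y)); auto. apply Rmax_lub; auto.
Qed.

Lemma sinh_lip x y M : exp x <= M -> exp y <= M -> exp (- x) <= M -> exp (- y) <= M ->
  Rabs (sinh x - sinh y) <= M * Rabs (x - y).
Proof.
  intros H1 H2 H3 H4. unfold sinh.
  assert (K1 := exp_lip x y M H1 H2). assert (K2 := exp_lip (- x) (- y) M H3 H4).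
  replace (- x - - y) with (- (x - y)) in K2 by ring. rewrite Rabs_Ropp in K2.
  replace ((exp x - exp (- x)) / 2 - (exp y - exp (- y)) / 2) with
     ((exp x - exp y) / 2 + (- (exp (- x) - exp (- y))) / 2) by field.
  eapply Rle_trans; [apply Rabs_triang|].
  unfold Rdiv. rewrite !Rabs_mult, Rabs_Ropp. rewrite (Rabs_pos_eq (/2)) by lra. lra.
Qed.

Lemma gronwall lo hi K (phi dphi : R -> R) x0 :
  0 <= K -> lo < x0 < hi ->
  (forall x, lo < x < hi -> is_derive phi x (dphi x)) ->
  (forall x, lo < x < hi -> 0 <= phi x) ->
  (forall x, lo < x < hi -> Rabs (dphi x) <= K * phi x) ->
  phi x0 = 0 -> forall x, lo < x < hi -> phi x = 0.
Proof.
  intros HK Hx0 Hd Hp Hb H0 x Hx.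
  destruct (Rle_dec x0 x) as [Hle|Hlt].
  - destruct (mvt_int lo hi (fun y => phi y * exp (- K * y))
       (fun y => dphi y * exp (- K * y) + phi y * (- K * exp (- K * y))) x0 x) as [c [Hc Kc]]; auto.
    + intros z Hz. apply (isd_mult phi (fun y => exp (- K * y))); [auto|].
      eapply isd_eq. apply (isd_comp exp (fun y => - K * y) z (exp (- K * z)) (- K)).
      apply is_derive_exp. apply isd_lin. rring.
    + assert (Hcin : lo < c < hi) by (unfold Rmin, Rmax in Hc; destruct (Rle_dec x0 x); lra).
      assert (B := Hb c Hcin). assert (P := Hp c Hcin). assert (Px := Hp x Hx).
      assert (E := exp_pos (- K * c)). assert (Ex := exp_pos (- K * x)).
      rewrite H0, Rmult_0_l, Rminus_0_r in Kc.
      assert (dphi c <= K * phi c) by (apply Rle_trans with (Rabs (dphi c)); [apply Rle_abs|auto]).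
      set (ec := exp (- K * c)) in *.
      assert (Q : dphi c * ec + phi c * (- K * ec) <= 0).
      { replace (dphi c * ec + phi c * (- K * ec)) with ((dphi c - K * phi c) * ec) by ring.
        apply Rmult_le_0_r; lra. }
      assert (phi x * exp (- K * x) <= 0).
      { rewrite Kc. apply Rmult_le_0_r; lra. }
      assert (phi x <= 0).
      { destruct (Rle_dec (phi x) 0); auto. assert (0 < phi x * exp (- K * x)) by (apply Rmult_lt_0_compat; lra). lra. }
      lra.
  - destruct (mvt_int lo hi (fun y => phi y * exp (K * y))
       (fun y => dphi y * exp (K * y) + phi y * (K * exp (K * y))) x x0) as [c [Hc Kc]]; auto.
    + intros z Hz. apply (isd_mult phi (fun y => exp (K * y))); [auto|].
      eapply isd_eq. apply (isd_comp exp (fun y => K * y) z (exp (K * z)) K).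
      apply is_derive_exp. apply isd_lin. rring.
    + assert (Hcin : lo < c < hi) by (unfold Rmin, Rmax in Hc; destruct (Rle_dec x x0); lra).
      assert (B := Hb c Hcin). assert (P := Hp c Hcin). assert (Px := Hp x Hx).
      assert (E := exp_pos (K * c)). assert (Ex := exp_pos (K * x)).
      assert (T := Rle_abs (- dphi c)). rewrite Rabs_Ropp in T.
      assert (- (K * phi c) <= dphi c) by lra.
      set (ec := exp (K * c)) in *.
      assert (Q : 0 <= dphi c * ec + phi c * (K * ec)).
      { replace (dphi c * ec + phi c * (K * ec)) with ((dphi c + K * phi c) * ec) by ring.
        apply Rmult_le_pos; lra. }
      assert (HH : 0 <= phi x0 * exp (K * x0) - phi x * exp (K * x)).
      { rewrite Kc. apply Rmult_le_pos; lra. }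
      rewrite H0, Rmult_0_l in HH.
      assert (phi x <= 0).
      { destruct (Rle_dec (phi x) 0); auto. assert (0 < phi x * exp (K * x)) by (apply Rmult_lt_0_compat; lra). lra. }
      lra.
Qed.

Lemma h_mono al x y : 1 <= al -> x <= y -> h_fun al x <= h_fun al y.
Proof. intros Ha [H|H]; [left; apply h_incr; auto|subst; lra]. Qed.

Lemma h_rev al x y : 1 <= al -> h_fun al x < h_fun al y -> x < y.
Proof.
  intros Ha H. destruct (Rlt_le_dec x y) as [K|K]; auto.
  apply (h_mono al) in K; auto. lra.
Qed.

Lemma energy_bounds a b l n E u : Hyp a b l n E -> -a < u < a ->
  E u <= B2 E /\ / E u <= B2 E.
Proof.
  intros H Hu. assert (En := energy _ _ _ _ _ _ H Hu). assert (HE := h_E _ _ _ _ _ H u Hu).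
  assert (0 < / E u) by (apply Rinv_0_lt_compat; auto).
  assert (0 <= cf E u ^ 2) by apply pow2_ge_0. unfold B2. lra.
Qed.

Lemma dz_eq a b l n E x : Hyp a b l n E -> -a < x < a ->
  Derive (Derive (fun y => ln (E y))) x = - 4 * sinh (ln (E x)).
Proof. intros H Hx. assert (K := z_ode _ _ _ _ _ _ H Hx). lra. Qed.

Lemma closed_form a b l n E al u0 w0 (hinv : R -> R) :
  Hyp a b l n E -> 1 <= al -> al + / al = B2 E ->
  (forall y, h_fun al (hinv y) = y) ->
  h_fun al w0 = u0 -> zeta al w0 = ln (E 0) ->
  Yz al w0 = Derive (fun y => ln (E y)) 0 ->
  forall u, -a < u < a -> ln (E u) = zeta al (hinv (u + u0)).
Proof.
  intros H Ha Hal Hh Hw0 Hz0 Hy0 u Hu.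
  set (z := fun y => ln (E y)).
  assert (Hapos := h_a _ _ _ _ _ H).
  set (wl := hinv (u0 - a)). set (wr := hinv (u0 + a)).
  assert (Hin : forall w, wl < w < wr -> -a < h_fun al w - u0 < a).
  { intros w [H1 H2]. apply (h_incr al) in H1; auto. apply (h_incr al) in H2; auto.
    unfold wl, wr in *. rewrite Hh in H1, H2. lra. }
  assert (Hin2 : forall w, -a < h_fun al w - u0 < a -> wl < w < wr).
  { intros w Hw. split; apply (h_rev al); auto; unfold wl, wr; rewrite Hh; lra. }
  assert (Hsa : 0 < sqrt al) by (apply sqrt_lt_R0; lra).
  assert (HB : al <= B2 E) by (rewrite <- Hal; assert (0 < / al) by (apply Rinv_0_lt_compat; lra); lra).
  set (d := fun w => z (h_fun al w - u0) - zeta al w).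
  set (e := fun w => Derive z (h_fun al w - u0) - Yz al w).
  set (hp := fun w => sqrt al / sqrt (G al w)).
  set (phi := fun w => d w * d w + e w * e w).
  set (dphi := fun w => 2 * d w * (hp w * e w) +
     2 * e w * (hp w * (-4 * (sinh (z (h_fun al w - u0)) - sinh (zeta al w))))).
  assert (Hd : forall w, wl < w < wr -> is_derive d w (hp w * e w)).
  { intros w Hw. assert (Hx := Hin w Hw). unfold d, e, hp. eapply isd_eq.
    - apply isd_minus; [|apply zeta_isd; auto].
      apply (isd_comp z (fun w => h_fun al w - u0) w (Derive z (h_fun al w - u0)) (sqrt al / sqrt (G al w))).
      + apply isd_Derive. eexists. apply (z_isd _ _ _ _ _ _ H Hx).
      + eapply isd_eq; [apply isd_minus; [apply h_isd; auto|apply isd_const]|rring].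
    - unfold Yz. assert (HG := G_ge1 al w Ha).
      assert (Hsg : 0 < sqrt (G al w)) by (apply sqrt_lt_R0; lra).
      assert (E1 : G al w = sqrt (G al w) * sqrt (G al w)) by (rewrite sqrt_sqrt; lra).
      match goal with |- ?A1 = ?B1 => change (@eq R A1 B1) end.
      set (sg := sqrt (G al w)) in *. rewrite E1. field. split; lra. }
  assert (He : forall w, wl < w < wr -> is_derive e w (hp w * (-4 * (sinh (z (h_fun al w - u0)) - sinh (zeta al w))))).
  { intros w Hw. assert (Hx := Hin w Hw). unfold e, hp. eapply isd_eq.
    - apply isd_minus; [|apply Yz_isd; auto].
      apply (isd_comp (Derive z) (fun w => h_fun al w - u0) w (Derive (Derive z) (h_fun al w - u0)) (sqrt al / sqrt (G al w))).
      + apply isd_Derive. eexists. apply (z2_isd _ _ _ _ _ _ H Hx).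
      + eapply isd_eq; [apply isd_minus; [apply h_isd; auto|apply isd_const]|rring].
    - unfold z. rewrite (dz_eq _ _ _ _ _ _ H Hx). rring. }
  assert (Hphi : forall w, wl < w < wr -> is_derive phi w (dphi w)).
  { intros w Hw. unfold phi, dphi. eapply isd_eq.
    - apply isd_plus; apply isd_mult; auto.
    - rring. }
  assert (Hbnd : forall w, wl < w < wr -> Rabs (dphi w) <= sqrt al * (1 + 4 * B2 E) * phi w).
  { intros w Hw. assert (Hx := Hin w Hw).
    destruct (hd_bounds al w Ha) as [_ Hh2].
    assert (Hhp : 0 <= hp w) by (unfold hp; apply Rlt_le, Rdiv_lt_0_compat; [auto|apply sqrt_lt_R0; assert (T:=G_ge1 al w Ha); lra]).
    assert (HE := h_E _ _ _ _ _ H _ Hx).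
    destruct (energy_bounds _ _ _ _ _ _ H Hx) as [EB1 EB2].
    assert (HG := G_ge1 al w Ha). assert (HG2 := G_le al w Ha).
    assert (S := sinh_lip (z (h_fun al w - u0)) (zeta al w) (B2 E)).
    assert (S' : Rabs (sinh (z (h_fun al w - u0)) - sinh (zeta al w)) <= B2 E * Rabs (d w)).
    { apply S.
      - unfold z. rewrite exp_ln; lra.
      - unfold zeta. rewrite exp_ln by (apply Rdiv_lt_0_compat; lra).
        apply Rle_trans with al; auto. apply (Rmult_le_reg_r al); [lra|]. unfold Rdiv.
        rewrite Rmult_assoc, Rinv_l by lra. simpl in HG2. nra.
      - unfold z. rewrite exp_Ropp, exp_ln; lra.
      - unfold zeta. rewrite exp_Ropp, exp_ln by (apply Rdiv_lt_0_compat; lra).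
        rewrite Rinv_div. apply Rle_trans with al; auto. unfold Rdiv.
        assert (/ G al w <= 1) by (rewrite <- Rinv_1; apply Rinv_le_contravar; lra).
        assert (0 < / G al w) by (apply Rinv_0_lt_compat; lra). nra. }
    set (D := d w) in *. set (Ee := e w) in *. set (Sd := sinh (z (h_fun al w - u0)) - sinh (zeta al w)) in *.
    set (hw := hp w) in *.
    unfold dphi, phi. fold D Ee hw Sd.
    replace (2 * D * (hw * Ee) + 2 * Ee * (hw * (-4 * Sd))) with (hw * (2 * D * Ee - 8 * Ee * Sd)) by ring.
    rewrite Rabs_mult, (Rabs_pos_eq hw) by auto.
    assert (T1 : Rabs (2 * D * Ee - 8 * Ee * Sd) <= (1 + 4 * B2 E) * (D * D + Ee * Ee)).
    { eapply Rle_trans; [apply Rabs_triang|]. rewrite Rabs_Ropp, !Rabs_mult.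
      rewrite (Rabs_pos_eq 2), (Rabs_pos_eq 8) by lra.
      assert (A1 : 2 * Rabs D * Rabs Ee <= D * D + Ee * Ee).
      { assert (0 <= (Rabs D - Rabs Ee) ^ 2) by apply pow2_ge_0.
        assert (Rabs D * Rabs D = D * D) by (rewrite <- Rabs_mult; apply Rabs_pos_eq; nra).
        assert (Rabs Ee * Rabs Ee = Ee * Ee) by (rewrite <- Rabs_mult; apply Rabs_pos_eq; nra). nra. }
      assert (A2 : Rabs Sd <= B2 E * Rabs D) by auto.
      assert (0 <= Rabs Ee) by apply Rabs_pos. assert (0 <= Rabs D) by apply Rabs_pos.
      assert (0 <= B2 E) by lra.
      assert (8 * Rabs Ee * Rabs Sd <= 8 * Rabs Ee * (B2 E * Rabs D)) by
        (apply Rmult_le_compat_l; [lra|auto]).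
      nra. }
    assert (0 <= D * D + Ee * Ee) by nra.
    assert (0 <= 1 + 4 * B2 E) by lra.
    apply Rle_trans with (hw * ((1 + 4 * B2 E) * (D * D + Ee * Ee))).
    - apply Rmult_le_compat_l; auto.
    - replace (sqrt al * (1 + 4 * B2 E) * (D * D + Ee * Ee)) with (sqrt al * ((1 + 4 * B2 E) * (D * D + Ee * Ee))) by ring.
      apply Rmult_le_compat_r; [nra|]. unfold hw, hp. auto. }
  assert (Hw0in : wl < w0 < wr) by (apply Hin2; lra).
  assert (Hphi0 : phi w0 = 0).
  { unfold phi, d, e. rewrite Hw0, Rminus_diag. unfold z. rewrite Hz0, Hy0, !Rminus_diag. ring. }
  set (w := hinv (u + u0)).
  assert (Hwh : h_fun al w - u0 = u) by (unfold w; rewrite Hh; ring).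
  assert (Hwin : wl < w < wr) by (apply Hin2; lra).
  assert (K := gronwall wl wr (sqrt al * (1 + 4 * B2 E)) phi dphi w0
     ltac:(assert (0 <= B2 E) by lra; nra) Hw0in Hphi
     ltac:(intros; unfold phi; nra) Hbnd Hphi0 w Hwin).
  assert (Kd : d w = 0) by (unfold phi in K; nra).
  unfold d in Kd. rewrite Hwh in Kd. unfold z in Kd. lra.
Qed.

Lemma G_neg al w : G al (- w) = G al w.
Proof. unfold G. rewrite sin_neg, cos_neg. ring. Qed.
Lemma Yz_neg al w : Yz al (- w) = - Yz al w.
Proof. unfold Yz. rewrite G_neg. unfold Gd. rewrite sin_neg, cos_neg. unfold Rdiv. ring. Qed.
Lemma zeta_neg al w : zeta al (- w) = zeta al w.
Proof. unfold zeta. rewrite G_neg. reflexivity. Qed.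

Lemma choose_alpha E0 c0 : 0 < E0 ->
  exists al w0, 1 <= al /\ al + / al = c0 ^ 2 + E0 + / E0 /\
    zeta al w0 = ln E0 /\ Yz al w0 = 2 * c0.
Proof.
  intros HE.
  set (B := c0 ^ 2 + E0 + / E0).
  assert (HiE : 0 < / E0) by (apply Rinv_0_lt_compat; auto).
  assert (Hsum : 2 <= E0 + / E0).
  { assert (0 <= (E0 - 1) ^ 2) by apply pow2_ge_0.
    assert (E0 * / E0 = 1) by (field; lra). nra. }
  assert (Hc2 : 0 <= c0 ^ 2) by apply pow2_ge_0.
  assert (HB : 2 <= B) by (unfold B; lra).
  set (sq := sqrt (B ^ 2 - 4)).
  assert (Hsq0 : 0 <= sq) by apply sqrt_pos.
  assert (Hsq2 : sq * sq = B ^ 2 - 4) by (apply sqrt_sqrt; nra).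
  set (al := (B + sq) / 2).
  assert (Hal1 : 1 <= al) by (unfold al; lra).
  assert (Hinv : / al = (B - sq) / 2).
  { assert (Hm : al * ((B - sq) / 2) = 1).
    { unfold al. replace ((B + sq) / 2 * ((B - sq) / 2)) with ((B * B - sq * sq) / 4) by field.
      rewrite Hsq2. field. }
    rewrite <- (Rmult_1_r (/ al)), <- Hm, <- Rmult_assoc, Rinv_l, Rmult_1_l by lra. reflexivity. }
  assert (Halsum : al + / al = B) by (rewrite Hinv; unfold al; field).
  exists al.
  destruct (Req_dec al 1) as [Ha1|Ha1].
  -
    assert (B = 2) by (rewrite <- Halsum, Ha1; field).
    assert (Hc0 : c0 ^ 2 = 0) by (unfold B in *; lra).
    assert (HE1 : E0 = 1).
    { assert (E0 + / E0 = 2) by (unfold B in *; lra).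
      assert (E0 * / E0 = 1) by (field; lra).
      assert ((E0 - 1) ^ 2 = 0) by nra. apply Rminus_diag_uniq. 
      destruct (Req_dec (E0 - 1) 0); auto. assert (0 < (E0 - 1) ^ 2) by (apply pow2_gt_0; auto). lra. }
    assert (c0 = 0) by (simpl in Hc0; nra).
    exists 0. split; [lra|split; [auto|split]].
    + unfold zeta, G. rewrite Ha1, sin_0, cos_0, HE1, ln_1. replace ((1 ^ 2 * 1 ^ 2 + 0 ^ 2) / 1) with 1 by field.
      apply ln_1.
    + unfold Yz, Gd. rewrite Ha1, sin_0. subst c0. unfold Rdiv.
      replace (2 * (1 - 1 ^ 2) * 0 * cos 0) with 0 by ring. ring.
  - assert (Hal : 1 < al) by lra.
    set (k := al ^ 2 - 1).
    assert (Hk : 0 < k) by (unfold k; nra).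
    assert (Hprod : 0 <= (al - E0) * (al * E0 - 1)).
    { assert (al * E0 * (al + / al - (E0 + / E0)) = (al - E0) * (al * E0 - 1)) by (field; lra).
      rewrite <- H. apply Rmult_le_pos; [nra|]. rewrite Halsum. unfold B. lra. }
    assert (Hp1 : al - E0 >= 0 /\ al * E0 - 1 >= 0).
    { destruct (Rle_dec 0 (al - E0)).
      - split; [lra|]. destruct (Rle_dec 0 (al * E0 - 1)); [lra|].
        assert (al - E0 = 0) by nra. assert (al * E0 - 1 < 0) by lra. nra.
      - assert (al * E0 - 1 <= 0) by nra. nra. }
    destruct Hp1 as [Hp1 Hp2].
    set (S := (al ^ 2 - al * E0) / k).
    assert (HS0 : 0 <= S) by (unfold S; apply Rdiv_le_0_compat; nra).
    assert (HS1 : S <= 1) by (unfold S; apply (Rmult_le_reg_r k); [auto|]; unfold Rdiv;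
       rewrite Rmult_assoc, Rinv_l, Rmult_1_r by lra; unfold k; nra).
    set (sg := sqrt S).
    assert (Hsg0 : 0 <= sg) by apply sqrt_pos.
    assert (Hsg2 : sg * sg = S) by (apply sqrt_sqrt; auto).
    assert (Hsg1 : sg <= 1) by nra.
    set (w1 := asin sg).
    assert (Hs1 : sin w1 = sg) by (apply sin_asin; lra).
    assert (Hc1 : cos w1 = sqrt (1 - S)) by (unfold w1; rewrite cos_asin by lra; unfold Rsqr; rewrite Hsg2; reflexivity).
    set (tg := sqrt (1 - S)) in *.
    assert (Htg0 : 0 <= tg) by apply sqrt_pos.
    assert (Htg2 : tg * tg = 1 - S) by (apply sqrt_sqrt; lra).
    assert (HG1 : G al w1 = al * E0).
    { unfold G. rewrite Hs1, Hc1. simpl. rewrite !Rmult_1_r, Htg2, Hsg2. unfold S, k. field. unfold k in Hk. simpl in Hk |- *. lra. }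
    assert (Hz1 : zeta al w1 = ln E0).
    { unfold zeta. rewrite HG1. f_equal. field. lra. }
    assert (HalE : 0 < al * E0) by nra.
    assert (Hsa : 0 < sqrt al) by (apply sqrt_lt_R0; lra).
    assert (Hsae : 0 < sqrt (al * E0)) by (apply sqrt_lt_R0; lra).
    set (Y := Yz al w1).
    assert (HY : Y = 2 * (1 - al ^ 2) * sg * tg / (sqrt al * sqrt (al * E0))).
    { unfold Y, Yz, Gd. rewrite HG1, Hs1, Hc1. reflexivity. }
    assert (HYneg : Y <= 0).
    { rewrite HY. unfold Rdiv. apply Rmult_le_0_r; [|left; apply Rinv_0_lt_compat; nra].
      assert (1 - al ^ 2 < 0) by nra. assert (0 <= sg * tg) by nra. nra. }
    assert (HY2 : Y * Y = 4 * (c0 * c0)).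
    { rewrite HY.
      assert (Ea : sqrt al * sqrt al = al) by (apply sqrt_sqrt; lra).
      assert (Eb : sqrt (al * E0) * sqrt (al * E0) = al * E0) by (apply sqrt_sqrt; lra).
      transitivity (4 * (1 - al ^ 2) ^ 2 * (sg * sg) * (tg * tg) / ((sqrt al * sqrt al) * (sqrt (al * E0) * sqrt (al * E0)))).
      - field. split; lra.
      - rewrite Ea, Eb, Hsg2, Htg2.
        assert (Hc0 : c0 ^ 2 = al + / al - E0 - / E0) by (rewrite Halsum; unfold B; ring).
        simpl in Hc0. rewrite Rmult_1_r in Hc0. rewrite Hc0. unfold S, k. field. unfold k in Hk. repeat split; lra. }
    assert (Habs : Y = - 2 * Rabs c0).
    { assert (Rabs c0 * Rabs c0 = c0 * c0) by (rewrite <- Rabs_mult; apply Rabs_pos_eq; nra).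
      assert (0 <= Rabs c0) by apply Rabs_pos. nra. }
    destruct (Rle_dec c0 0) as [Hc|Hc].
    + exists w1. split; [lra|split; [auto|split; auto]].
      fold Y. rewrite Habs, Rabs_left1 by auto. ring.
    + exists (- w1). split; [lra|split; [auto|split]].
      * rewrite zeta_neg; auto.
      * rewrite Yz_neg. fold Y. rewrite Habs, Rabs_right by lra. ring.
Qed.

Lemma comb_zero X Y Z k c :
  (forall pr, is_pr pr -> pr X + k * pr Y + c * pr Z = 0) ->
  vadd (vadd X (vscal k Y)) (vscal c Z) = vzero.
Proof.
  intros Hp. apply V4_eq.
  - exact (Hp x1 ltac:(unfold is_pr; tauto)).
  - exact (Hp x2 ltac:(unfold is_pr; tauto)).
  - exact (Hp x3 ltac:(unfold is_pr; tauto)).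
  - exact (Hp x4 ltac:(unfold is_pr; tauto)).
Qed.

Lemma gf_exp E u : exp (ln (E u) / 2) * gf E u = 1.
Proof. unfold gf. rewrite <- exp_plus. replace (ln (E u) / 2 + - ln (E u) / 2) with 0 by field. apply exp_0. Qed.

Lemma final_pr a b l n E pr u v : Hyp a b l n E -> is_pr pr -> -a < u < a -> -b < v < b ->
  l 0 0 = e1 -> pu l 0 0 = vscal (sqrt (E 0)) e2 ->
  pv l 0 0 = vscal (sqrt (E 0)) e3 -> n 0 0 = e4 ->
  pr (l u v) = exp (ln (E u) / 2) * pr (pf l E u) +
    exp (ln (E u) / 2) / sqrt (B2 E) ^ 2 *
      (cos (sqrt (B2 E) * v) * pr (Avec (ln (E 0)) (cf E 0)) + sqrt (B2 E) * sin (sqrt (B2 E) * v) * pr e3).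
Proof.
  intros H Hp Hu Hv hl0 hlu0 hlv0 hn0.
  assert (K := S4 _ _ _ _ _ _ _ _ H Hp Hu Hv hl0 hlu0 hlv0 hn0).
  rewrite (pr_pf pr l E u Hp).
  rewrite (pr_qv pr _ _ _ v Hp) in K.
  assert (HB := B2_pos _ _ _ _ _ H).
  assert (Hb : 0 < sqrt (B2 E)) by (apply sqrt_lt_R0; auto).
  assert (G1 := gf_exp E u).
  set (Q0 := pr (qv (ln (E 0)) (cf E 0) (sqrt (B2 E)) 0)) in *.
  set (ee := exp (ln (E u) / 2)) in *. set (g := gf E u) in *.
  set (W := cos (sqrt (B2 E) * v) * pr (Avec (ln (E 0)) (cf E 0)) + sqrt (B2 E) * sin (sqrt (B2 E) * v) * pr e3) in *.
  transitivity (ee * g * pr (l u v)); [rewrite G1; ring|].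
  transitivity (ee * (g * pr (l u 0) + (/ sqrt (B2 E) ^ 2 * W - Q0))); [rewrite <- K; ring|].
  field. lra.
Qed.

Theorem theorem2p4 (a b : R) (l n : R -> R -> V4) (E : R -> R) :
  0 < a -> 0 < b ->
  let D := fun u v => -a < u < a /\ -b < v < b in
  (* smooth regular surface in S^3 with a smooth unit normal field *)
  smooth_on_v D l -> smooth_on_v D n ->
  (forall u, -a < u < a -> 0 < E u) ->
  (forall u v, D u v ->
     dot (l u v) (l u v) = 1 /\
     dot (pu l u v) (pu l u v) = E u /\
     dot (pv l u v) (pv l u v) = E u /\
     dot (pu l u v) (pv l u v) = 0 /\
     dot (n u v) (n u v) = 1 /\
     dot (n u v) (l u v) = 0 /\
     dot (n u v) (pu l u v) = 0 /\
     dot (n u v) (pv l u v) = 0 /\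
     dot (pu (pu l) u v) (n u v) = 1 /\
     dot (pv (pu l) u v) (n u v) = 0 /\
     dot (pv (pv l) u v) (n u v) = -1) ->
  (* generalized torus of second type: minimal, the v-lines are
     principal lines (Rodrigues) and circles *)
  (forall u v, D u v -> mean_curvature l n u v = 0) ->
  (forall u v, D u v -> exists lam, pv n u v = vscal lam (pv l u v)) ->
  (forall u, -a < u < a -> is_circle_on (fun v => -b < v < b) (fun v => l u v)) ->
  (* non-constant Gauss curvature *)
  ~ (exists K0, forall u v, D u v -> gauss_curvature l u v = K0) ->
  (* initial frame *)
  l 0 0 = e1 -> pu l 0 0 = vscal (sqrt (E 0)) e2 ->
  pv l 0 0 = vscal (sqrt (E 0)) e3 -> n 0 0 = e4 ->
  let z := fun u => ln (E u) in
  let s := z 0 in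
  let t := Derive z 0 / 2 in
  let beta := sqrt (t ^ 2 + 2 * cosh s) in
  ((forall u, -a < u < a -> Derive (Derive z) u + 4 * sinh (z u) = 0) /\
   z 0 = s /\ Derive z 0 = 2 * t) /\
  (exists alpha u0 : R, 0 < alpha /\
     exists hinv : R -> R,
       (forall x, hinv (h_fun alpha x) = x) /\
       (forall y, h_fun alpha (hinv y) = y) /\
       (forall u, -a < u < a ->
          z u = ln ((alpha ^ 2 * cos (hinv (u + u0)) ^ 2
                     + sin (hinv (u + u0)) ^ 2) / alpha))) /\
  (exists p : R -> V4,
     (forall u, -a < u < a ->
        ex_derive_v p u /\ ex_derive_v (Dv p) u /\
        vadd (vadd (Dv (Dv p) u) (vscal (Derive z u) (Dv p u)))
             (vscal (beta ^ 2) (p u)) = vzero) /\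
     p 0 = vscal (/ beta ^ 2)
             (vadd (vadd (vscal (exp (- s / 2) * (t ^ 2 + exp (- s))) e1)
                         (vscal (- t) e2))
                   (vscal (- exp (- s / 2)) e4)) /\
     Dv p 0 = vadd (vscal (- t * exp (- s / 2)) e1) e2 /\
     (forall u v, D u v ->
        l u v = vadd (vscal (exp (z u / 2)) (p u))
                  (vscal (exp (z u / 2) / beta ^ 2)
                     (vadd (vscal (cos (beta * v))
                              (vadd (vadd (vscal (exp (s / 2)) e1) (vscal t e2))
                                    (vscal (exp (- s / 2)) e4)))
                           (vscal (beta * sin (beta * v)) e3))))).
Proof.
  intros Ha Hb D HL HN HE Hid Hmin Hrod Hcirc Hgauss hl0 hlu0 hlv0 hn0 z s t beta.
  assert (H : Hyp a b l n E) by (constructor; auto).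
  assert (Ha0 : -a < 0 < a) by lra.
  assert (HE0 : 0 < E 0) by auto.
  assert (Hz : forall u, -a < u < a -> Derive (fun u => ln (E u)) u = 2 * cf E u).
  { intros u Hu. transitivity (Derive E u / E u); [apply is_derive_unique; exact (z_isd _ _ _ _ _ _ H Hu)|].
    unfold cf. assert (HEu := HE u Hu). field. lra. }
  assert (Ht : t = cf E 0) by (unfold t, z; rewrite (Hz 0 Ha0); field).
  assert (Hs : s = ln (E 0)) by reflexivity.
  assert (Hbeta : beta = sqrt (B2 E)).
  { unfold beta. rewrite Ht, Hs. unfold B2, cosh. rewrite exp_Ropp, exp_ln by auto. f_equal. field. lra. }
  assert (HB := B2_pos _ _ _ _ _ H).
  assert (Hbeta2 : beta ^ 2 = B2 E) by (rewrite Hbeta; simpl; rewrite Rmult_1_r; apply sqrt_sqrt; lra).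
  clearbody s t beta.
  split; [split; [|split]|split].
  - intros u Hu. subst z. exact (z_ode _ _ _ _ _ _ H Hu).
  - rewrite Hs. reflexivity.
  - rewrite Ht. subst z. apply Hz; auto.
  - destruct (choose_alpha (E 0) (cf E 0) HE0) as [al [w0 [Hal [Hsum [Hz0 Hy0]]]]].
    exists al, (h_fun al w0). split; [lra|].
    exists (fun y => proj1_sig (h_surj al y Hal)).
    split; [|split].
    + intros x. apply (h_inj al); auto. exact (proj2_sig (h_surj al (h_fun al x) Hal)).
    + intros y. exact (proj2_sig (h_surj al y Hal)).
    + intros u Hu. subst z.
      exact (closed_form a b l n E al (h_fun al w0) w0 (fun y => proj1_sig (h_surj al y Hal)) H Hal
        ltac:(unfold B2; exact Hsum) (fun y => proj2_sig (h_surj al y Hal)) eq_refl Hz0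
        ltac:(rewrite (Hz 0 Ha0); exact Hy0) u Hu).
  - exists (pf l E). split; [|split; [|split]].
    + intros u Hu. split; [exact (pf_exd _ _ _ _ _ _ H Hu)|split; [exact (Dpf_exd _ _ _ _ _ _ H Hu)|]].
      rewrite (DDv_pf _ _ _ _ _ _ H Hu), (Dv_pf _ _ _ _ _ _ H Hu).
      apply comb_zero. intros pr Hp. subst z. rewrite (Hz u Hu), Hbeta2.
      exact (pf_ode _ _ _ _ _ _ _ H Hp Hu hl0 hlu0 hlv0 hn0).
    + unfold pf. rewrite hl0. subst s t. rewrite Hbeta.
      assert (Hr : 0 < sqrt (E 0)) by (apply sqrt_lt_R0; auto).
      assert (Hr2 : sqrt (E 0) * sqrt (E 0) = E 0) by (apply sqrt_sqrt; lra).
      assert (Hb2' : sqrt (B2 E) ^ 2 = B2 E) by (simpl; rewrite Rmult_1_r; apply sqrt_sqrt; lra).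
      unfold qv. rewrite Hb2'.
      unfold gf. rewrite exp_mhalf by auto.
      rewrite exp_Ropp, exp_ln by auto.
      assert (HBr : 0 < cf E 0 ^ 2 + sqrt (E 0) * sqrt (E 0) + / (sqrt (E 0) * sqrt (E 0))) by
        (rewrite Hr2; unfold B2 in HB; exact HB).
      apply V4_eq; unfold qv, Avec, vadd, vscal, e1, e2, e3, e4, mk4, x1, x2, x3, x4; simpl;
        rewrite ?Rmult_0_r, ?sin_0, ?cos_0, ?exp_half, ?exp_mhalf by auto;
        unfold B2; set (r := sqrt (E 0)) in *;
        rewrite <- ?Hr2; field; repeat match goal with |- _ /\ _ => split end; try lra; assert (0 <= cf E 0 ^ 2) by apply pow2_ge_0; assert (0 < r * r) by nra; nra.
    + rewrite (Dv_pf _ _ _ _ _ _ H Ha0). unfold P1. rewrite hl0, hlu0. subst s t.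
      assert (Hr : 0 < sqrt (E 0)) by (apply sqrt_lt_R0; auto).
      unfold gf. rewrite exp_mhalf by auto.
      apply V4_eq; unfold vadd, vscal, e1, e2, e3, e4, mk4, x1, x2, x3, x4; simpl;
        rewrite ?exp_mhalf by auto; field; lra.
    + intros u v Hd. destruct Hd as [Hu Hv]. subst z s t. rewrite Hbeta.
      apply V4_eq.
      * exact (final_pr _ _ _ _ _ x1 _ _ H ltac:(unfold is_pr; tauto) Hu Hv hl0 hlu0 hlv0 hn0).
      * exact (final_pr _ _ _ _ _ x2 _ _ H ltac:(unfold is_pr; tauto) Hu Hv hl0 hlu0 hlv0 hn0).
      * exact (final_pr _ _ _ _ _ x3 _ _ H ltac:(unfold is_pr; tauto) Hu Hv hl0 hlu0 hlv0 hn0).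
      * exact (final_pr _ _ _ _ _ x4 _ _ H ltac:(unfold is_pr; tauto) Hu Hv hl0 hlu0 hlv0 hn0).
Qed.
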